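(* Let $0\le\alpha<1$, $\mu\le\mu(\alpha)=\frac{(1-\alpha)^2}{4}$, $a_1,a_2\in\mathbb{R}$, and let $\alpha_1,\alpha_2$ be the eigenvalues of $A=\begin{pmatrix}0&a_1\\1&a_2\end{pmatrix}$ (labelled as in the context). Assume $$\lambda_{\alpha,\mu,n}-\lambda_{\alpha,\mu,l}\neq\alpha_1-\alpha_2\quad\text{for all }n,l\in\mathbb{N}^*,\ n\neq l.$$ Then the family $\{\lambda_{\alpha,\mu,n}-\alpha_1+\alpha_2,\ \lambda_{\alpha,\mu,n}\}_{n\ge1}=\{\lambda_{\alpha,\mu,n}+\alpha_2-\alpha_1: n\ge1\}\cup\{\lambda_{\alpha,\mu,n}:n\ge1\}$ can be arranged into a sequence $(\Lambda_{\alpha,\mu,n})_{n\ge1}$ of complex numbers satisfying: (1) $\Lambda_{\alpha,\mu,n}\neq\Lambda_{\alpha,\mu,m}$ for all $n\neq m$; (2) $\Re(\Lambda_{\alpha,\mu,n})>0$ for all $n\ge1$; (3) there is $\delta>0$ with $|\Im(\Lambda_{\alpha,\mu,n})|\le\delta\sqrt{\Re(\Lambda_{\alpha,\mu,n})}$ for all $n\ge1$; (4) $|\Lambda_{\alpha,\mu,n}|\le|\Lambda_{\alpha,\mu,n+1}|$ for all $n\ge1$; (5) there are $\varrho,q>0$ with $|\Lambda_{\alpha,\mu,n}-\Lambda_{\alpha,\mu,m}|\ge\varrho|n^2-m^2|$ for all $n,m$ with $|n-m|\ge q$, and $\inf_{n\neq m,\,|n-m|<q}|\Lambda_{\alpha,\mu,n}-\Lambda_{\alpha,\mu,m}|>0$;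 (6) there are $p,s>0$ with $|p\sqrt r-\mathcal N(r)|\le s$ for all $r>0$, where $\mathcal N(r)=\#\{n:|\Lambda_{\alpha,\mu,n}|\le r\}$.
   Context: $\nu(\alpha,\mu)=\frac{2}{2-\alpha}\sqrt{\mu(\alpha)-\mu}$, $(j_{\nu,n})_{n\ge1}$ is the increasing sequence of positive zeros of the Bessel function $J_\nu$, and $\lambda_{\alpha,\mu,n}=\left(\frac{2-\alpha}{2}\right)^2 j_{\nu(\alpha,\mu),n}^2$ (the Dirichlet eigenvalues of $-(x^\alpha\Phi')'-\mu x^{\alpha-2}\Phi$ on $(0,1)$). Labelling of eigenvalues of $A$: if $a_2^2+4a_1>0$, $\alpha_1=\frac12(a_2-\sqrt{a_2^2+4a_1})$, $\alpha_2=\frac12(a_2+\sqrt{a_2^2+4a_1})$; if $a_2^2+4a_1<0$, $\alpha_1=\frac12(a_2+i\sqrt{-(a_2^2+4a_1)})$, $\alpha_2=\frac12(a_2-i\sqrt{-(a_2^2+4a_1)})$; if $a_2^2+4a_1=0$, $\alpha_1=\alpha_2=a_2/2$ (in which case the family reduces to $\{\lambda_{\alpha,\mu,n}\}_{n\ge1}$). *)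

(* Defs.v *)
From Stdlib Require Import Reals Lra List.
From Coquelicot Require Import Coquelicot.
Open Scope R_scope.

Definition Gamma (x : R) : R :=
  RInt_gen (fun t => Rpower t (x - 1) * exp (- t)) (at_right 0) (Rbar_locally p_infty).

Definition BesselJ (nu x : R) : R :=
  Series (fun k : nat =>
    (-1) ^ k / (INR (Factorial.fact k) * Gamma (INR k + nu + 1))
      * (Rpower (x / 2) nu * (x / 2) ^ (2 * k))).

Definition is_pos_zeros_enum (f : R -> R) (j : nat -> R) : Prop :=
  (forall n, (1 <= n)%nat -> 0 < j n /\ f (j n) = 0) /\
  (forall n, (1 <= n)%nat -> j n < j (S n)) /\
  (forall x, 0 < x -> f x = 0 -> exists n, (1 <= n)%nat /\ j n = x).

Definition mu_crit (alpha : R) : R := (1 - alpha) ^ 2 / 4.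

Definition nu_am (alpha mu : R) : R := 2 / (2 - alpha) * sqrt (mu_crit alpha - mu).

Definition lambda_am (alpha : R) (j : nat -> R) (n : nat) : R :=
  ((2 - alpha) / 2) ^ 2 * (j n) ^ 2.

(* Eigenvalues of A = [[0, a1], [1, a2]] with the labelling of the paper. *)
Definition alpha1 (a1 a2 : R) : C :=
  let d := a2 ^ 2 + 4 * a1 in
  if Rlt_dec 0 d then RtoC ((a2 - sqrt d) / 2)
  else if Rlt_dec d 0 then (a2 / 2, sqrt (- d) / 2)%R
  else RtoC (a2 / 2).

Definition alpha2 (a1 a2 : R) : C :=
  let d := a2 ^ 2 + 4 * a1 in
  if Rlt_dec 0 d then RtoC ((a2 + sqrt d) / 2)
  else if Rlt_dec d 0 then (a2 / 2, - (sqrt (- d) / 2))%R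
  else RtoC (a2 / 2).

Definition count_le (Lam : nat -> C) (r : R) (N : nat) : Prop :=
  exists l : list nat, NoDup l /\ length l = N /\
    (forall n, In n l <-> ((1 <= n)%nat /\ Cmod (Lam n) <= r)).

(* Main.v *)
Require Import Defs.
From Stdlib Require Import Reals Lra List.
From Stdlib Require Import Lia Ranalysis5 ZArith Arith.
From Coquelicot Require Import Coquelicot.
Open Scope R_scope.

Lemma isd_eq (f : R -> R) (x l1 l2 : R) : is_derive f x l1 -> l1 = l2 -> is_derive f x l2.
Proof. intros H ->; exact H. Qed.

Lemma isd_mult (f g : R -> R) x df dg : is_derive f x df -> is_derive g x dg ->
  is_derive (fun t => f t * g t) x (df * g x + f x * dg).
Proof. intros H1 H2. apply (is_derive_mult f g x df dg H1 H2). intros; apply Rmult_comm. Qed.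

Lemma isd_plus (f g : R -> R) x df dg : is_derive f x df -> is_derive g x dg ->
  is_derive (fun t => f t + g t) x (df + dg).
Proof. intros H1 H2. apply (is_derive_plus f g x df dg H1 H2). Qed.

Lemma isd_minus (f g : R -> R) x df dg : is_derive f x df -> is_derive g x dg ->
  is_derive (fun t => f t - g t) x (df - dg).
Proof. intros H1 H2. apply (is_derive_minus f g x df dg H1 H2). Qed.

Lemma isd_scal (f : R -> R) c x df : is_derive f x df ->
  is_derive (fun t => c * f t) x (c * df).
Proof. intros H1. apply (is_derive_scal f x c df H1). Qed.

Lemma isd_opp (f : R -> R) x df : is_derive f x df ->
  is_derive (fun t => - f t) x (- df).
Proof. intros H1. apply (is_derive_opp f x df H1). Qed.

Lemma isd_comp (f g : R -> R) x df dg : is_derive f (g x) df -> is_derive g x dg ->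
  is_derive (fun t => f (g t)) x (dg * df).
Proof. intros H1 H2. apply (is_derive_comp f g x df dg H1 H2). Qed.

Lemma test (u : R -> R) x l : is_derive u x l -> is_derive (fun t => u t * sin t - 2 * u t) x (l * sin x + u x * cos x - 2 * l).
Proof. intros H. apply isd_minus. apply isd_mult; auto. auto_derive; auto; ring. apply isd_scal; auto. Qed.

Section Sturm.
Variables (u u1 q : R -> R) (a : R) (k : R).
Let v x := sin (k * (x - a)).
Let W x := u1 x * sin (k * (x - a)) - u x * (k * cos (k * (x - a))).
Let dW x := (k * k - q x) * u x * sin (k * (x - a)).

Lemma W_deriv (x : R) : is_derive u x (u1 x) -> is_derive u1 x (- q x * u x) ->
  is_derive W x (dW x).
Proof.
  intros H1 H2. unfold W, dW.
  eapply isd_eq.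
  apply isd_minus. apply isd_mult. exact H2. auto_derive; auto.
  apply isd_mult. exact H1. auto_derive; auto.
  simpl. unfold Rminus. ring.
Qed.
End Sturm.

Lemma deriv_pos_left (u : R -> R) (a b l : R) : a < b -> is_derive u b l -> 0 < l -> u b = 0 ->
  exists x, a < x < b /\ u x < 0.
Proof.
  intros Hab Hd Hl Hu. apply is_derive_Reals in Hd.
  destruct (Hd l Hl) as [[del Hdel] Hh].
  set (h := - (Rmin del (b - a)) / 2).
  assert (Hm1 : 0 < Rmin del (b - a)) by (apply Rmin_pos; lra).
  assert (Hm2 : Rmin del (b - a) <= del) by apply Rmin_l.
  assert (Hm3 : Rmin del (b - a) <= b - a) by apply Rmin_r.
  assert (hneg : h < 0) by (unfold h; lra).
  specialize (Hh h ltac:(lra)).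
  assert (Habs : Rabs h < del) by (rewrite Rabs_left; unfold h; lra).
  specialize (Hh Habs). rewrite Hu in Hh.
  exists (b + h). split. unfold h; lra.
  apply Rabs_def2 in Hh. destruct Hh as [_ Hh].
  assert (Hq : 0 < (u (b + h) - 0) / h) by lra.
  unfold Rdiv in Hq.
  destruct (Rlt_le_dec (u (b+h)) 0) as [H|H]; auto.
  exfalso. assert (0 <= u (b+h) - 0) by lra.
  assert (/ h < 0) by (apply Rinv_lt_0_compat; lra).
  nra.
Qed.

Lemma sturm_lower (u u1 q : R -> R) (a b M : R) :
  a < b -> 0 < M ->
  (forall x, a <= x <= b -> is_derive u x (u1 x)) ->
  (forall x, a <= x <= b -> is_derive u1 x (- q x * u x)) ->
  u a = 0 -> u b = 0 -> (forall x, a < x < b -> 0 < u x) ->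
  (forall x, a < x < b -> q x < M) -> PI / sqrt M <= b - a.
Proof.
  intros Hab HM Hd1 Hd2 Ha Hb Hpos Hq.
  destruct (Rle_lt_dec (PI / sqrt M) (b - a)) as [H|H]; auto. exfalso.
  set (k := sqrt M).
  assert (Hk : 0 < k) by (apply sqrt_lt_R0; lra).
  assert (Hkk : k * k = M) by (apply sqrt_sqrt; lra).
  assert (Hkb : k * (b - a) < PI).
  { fold k in H. apply (Rmult_lt_compat_l k) in H; auto.
    replace (k * (PI / k)) with PI in H by (field; lra). lra. }
  destruct (MVT_cor2 (fun x => u1 x * sin (k * (x - a)) - u x * (k * cos (k * (x - a))))
     (fun x => (k * k - q x) * u x * sin (k * (x - a))) a b Hab) as [c [Hc1 Hc2]].
  { intros c Hc. apply is_derive_Reals. apply W_deriv; auto. }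
  rewrite Ha in Hc1. replace (k * (a - a)) with 0 in Hc1 by ring. rewrite sin_0 in Hc1.
  assert (Hs : 0 < sin (k * (c - a))).
  { apply sin_gt_0; nra. }
  assert (Hsb : 0 < sin (k * (b - a))) by (apply sin_gt_0; nra).
  assert (Hqc := Hq c Hc2). assert (Huc := Hpos c Hc2).
  assert (0 < (k * k - q c) * u c * sin (k * (c - a)) * (b - a)).
  { apply Rmult_lt_0_compat; [|lra]. apply Rmult_lt_0_compat; auto. apply Rmult_lt_0_compat; lra. }
  rewrite Hb in Hc1.
  assert (Hu1b : 0 < u1 b).
  { assert (0 < u1 b * sin (k * (b - a))) by lra.
    destruct (Rlt_le_dec 0 (u1 b)); auto. nra. }
  destruct (deriv_pos_left u a b (u1 b) Hab (Hd1 b ltac:(lra)) Hu1b Hb) as [x [Hx1 Hx2]].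
  specialize (Hpos x Hx1). lra.
Qed.

Lemma sturm_upper (u u1 q : R -> R) (a b m : R) :
  a < b -> 0 < m ->
  (forall x, a <= x <= b -> is_derive u x (u1 x)) ->
  (forall x, a <= x <= b -> is_derive u1 x (- q x * u x)) ->
  u a = 0 -> (forall x, a < x < b -> 0 < u x) ->
  (forall x, a < x < b -> m <= q x) -> b - a <= PI / sqrt m.
Proof.
  intros Hab Hm Hd1 Hd2 Ha Hpos Hq.
  destruct (Rle_lt_dec (b - a) (PI / sqrt m)) as [H|H]; auto. exfalso.
  set (k := sqrt m).
  assert (Hk : 0 < k) by (apply sqrt_lt_R0; lra).
  assert (Hkk : k * k = m) by (apply sqrt_sqrt; lra).
  set (a' := a + PI / k).
  assert (HPk : 0 < PI / k) by (apply Rdiv_lt_0_compat; auto; apply PI_RGT_0).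
  assert (Ha' : a < a' < b) by (unfold a'; fold k in H; lra).
  assert (Hka : k * (a' - a) = PI) by (unfold a'; field; lra).
  destruct (MVT_cor2 (fun x => u1 x * sin (k * (x - a)) - u x * (k * cos (k * (x - a))))
     (fun x => (k * k - q x) * u x * sin (k * (x - a))) a a' ltac:(lra)) as [c [Hc1 Hc2]].
  { intros c Hc. apply is_derive_Reals. apply W_deriv; apply Hd1 || apply Hd2; lra. }
  rewrite Ha in Hc1. replace (k * (a - a)) with 0 in Hc1 by ring. rewrite sin_0 in Hc1.
  rewrite Hka, sin_PI, cos_PI in Hc1.
  assert (Hs : 0 < sin (k * (c - a))).
  { apply sin_gt_0; nra. }
  assert (Hqc := Hq c ltac:(lra)). assert (Huc := Hpos c ltac:(lra)).
  assert (Hua := Hpos a' ltac:(lra)).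
  assert ((k * k - q c) * u c * sin (k * (c - a)) * (a' - a) <= 0).
  { assert (k * k - q c <= 0) by lra.
    assert (0 <= u c * sin (k * (c - a)) * (a' - a)).
    { apply Rmult_le_pos; [|lra]. apply Rmult_le_pos; lra. }
    nra. }
  nra.
Qed.

Lemma nat_above (x : R) : exists n : nat, x < INR n.
Proof.
  destruct (archimed x) as [H1 _].
  destruct (Z.lt_ge_cases (up x) 0) as [Hz|Hz].
  - exists 0%nat. simpl. apply IZR_lt in Hz. lra.
  - exists (Z.to_nat (up x)). rewrite INR_IZR_INZ, Z2Nat.id; [lra|lia].
Qed.

Lemma finite_bound (f : nat -> R) (K : nat) : exists B, 0 <= B /\ forall n, (n <= K)%nat -> Rabs (f n) <= B.
Proof.
  induction K as [|K [B [HB IH]]].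
  - exists (Rabs (f 0%nat)). split. apply Rabs_pos. intros n Hn. replace n with 0%nat by lia. lra.
  - exists (Rmax B (Rabs (f (S K)))). split. apply (Rle_trans _ B); auto; apply Rmax_l.
    intros n Hn. destruct (Nat.eq_dec n (S K)) as [->|Hne]. apply Rmax_r.
    apply (Rle_trans _ B). apply IH; lia. apply Rmax_l.
Qed.

Lemma sqrt_le_sq y z : 0 <= z -> y <= z * z -> sqrt y <= z.
Proof. intros Hz Hy. rewrite <- (sqrt_square z Hz). apply sqrt_le_1_alt; auto. Qed.

Lemma sq_le_sqrt y z : 0 <= z -> z * z <= y -> z <= sqrt y.
Proof. intros Hz Hy. rewrite <- (sqrt_square z Hz). apply sqrt_le_1_alt; auto. Qed.

Lemma pi_lower e : 0 <= e <= 1/2 -> PI * (1 - e) <= PI / sqrt (1 + e).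
Proof.
  intros He. assert (HP := PI_RGT_0).
  assert (Hs : sqrt (1 + e) <= 1 + e / 2) by (apply sqrt_le_sq; nra).
  assert (Hs0 : 0 < sqrt (1 + e)) by (apply sqrt_lt_R0; lra).
  unfold Rdiv. apply (Rmult_le_reg_r (sqrt (1 + e))); auto.
  replace (PI * / sqrt (1 + e) * sqrt (1 + e)) with PI by (field; lra).
  assert ((1 - e) * sqrt (1 + e) <= 1).
  { apply (Rle_trans _ ((1 - e) * (1 + e/2))). apply Rmult_le_compat_l; lra. nra. }
  nra.
Qed.

Lemma pi_upper e : 0 <= e <= 1/2 -> PI / sqrt (1 - e) <= PI * (1 + 2 * e).
Proof.
  intros He. assert (HP := PI_RGT_0).
  assert (Hs : / (1 + 2 * e) <= sqrt (1 - e)).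
  { apply sq_le_sqrt. left; apply Rinv_0_lt_compat; lra.
    rewrite <- Rinv_mult. apply (Rmult_le_reg_r ((1 + 2 * e) * (1 + 2 * e))). nra.
    rewrite Rinv_l by nra. nra. }
  assert (Hs0 : 0 < / (1 + 2 * e)) by (apply Rinv_0_lt_compat; lra).
  unfold Rdiv. apply Rmult_le_compat_l; [lra|].
  rewrite <- (Rinv_inv (1 + 2 * e)). apply Rinv_le_contravar; auto.
Qed.

Section Zeros.
Variables (w w1 : R -> R) (gam : R) (j : nat -> R).
Let q x := 1 - gam / (x * x).
Hypothesis Hd1 : forall x, 0 < x -> is_derive w x (w1 x).
Hypothesis Hd2 : forall x, 0 < x -> is_derive w1 x (- (1 - gam / (x * x)) * w x).
Hypothesis Hj1 : forall n, (1 <= n)%nat -> 0 < j n /\ w (j n) = 0.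
Hypothesis Hj2 : forall n, (1 <= n)%nat -> j n < j (S n).
Hypothesis Hj3 : forall x, 0 < x -> w x = 0 -> exists n, (1 <= n)%nat /\ j n = x.

Lemma j_mono n m : (1 <= n)%nat -> (n <= m)%nat -> j n <= j m.
Proof.
  intros Hn Hm. induction Hm. lra. assert (H := Hj2 m ltac:(lia)). lra.
Qed.

Lemma j_smono n m : (1 <= n)%nat -> (n < m)%nat -> j n < j m.
Proof.
  intros Hn Hm. assert (H := Hj2 n Hn). assert (H2 := j_mono (S n) m ltac:(lia) Hm). lra.
Qed.

Lemma no_zero_between k x : (1 <= k)%nat -> j k < x < j (S k) -> w x <> 0.
Proof.
  intros Hk Hx Hw. destruct (Hj3 x) as [n [Hn Hjn]]; auto.
  destruct (Hj1 k Hk); lra.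
  destruct (le_lt_dec n k) as [Hnk|Hnk].
  - assert (H := j_mono n k Hn Hnk). lra.
  - assert (H := j_mono (S k) n ltac:(lia) Hnk). lra.
Qed.

Lemma w_cont x : 0 < x -> continuity_pt w x.
Proof.
  intros Hx. apply derivable_continuous_pt. exists (w1 x). apply is_derive_Reals. auto.
Qed.

Lemma sign_const k : (1 <= k)%nat ->
  (forall x, j k < x < j (S k) -> 0 < w x) \/ (forall x, j k < x < j (S k) -> w x < 0).
Proof.
  intros Hk. assert (Hjk := Hj1 k Hk). assert (Hjs := Hj2 k Hk).
  set (m := (j k + j (S k)) / 2).
  assert (Hm : j k < m < j (S k)) by (unfold m; lra).
  destruct (Rlt_le_dec 0 (w m)) as [Hp|Hn].
  - left. intros x Hx. destruct (Rlt_le_dec 0 (w x)) as [H|H]; auto. exfalso.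
    destruct H as [H|H]; [| apply (no_zero_between k x); auto].
    destruct (Rlt_le_dec x m) as [Hxm|Hxm].
    + destruct (IVT_interv w x m) as [z [Hz1 Hz2]]; auto.
      intros a Ha; apply w_cont; lra.
      apply (no_zero_between k z); auto; lra.
    + destruct Hxm as [Hxm|Hxm]; [|subst; lra].
      destruct (IVT_interv (fun t => - w t) m x) as [z [Hz1 Hz2]]; auto.
      intros a Ha. apply continuity_pt_opp. apply w_cont; lra. lra. lra.
      apply (no_zero_between k z); auto; lra.
  - right. destruct Hn as [Hn|Hn]; [| exfalso; apply (no_zero_between k m); auto].
    intros x Hx. destruct (Rlt_le_dec (w x) 0) as [H|H]; auto. exfalso.
    destruct H as [H|H]; [| apply (no_zero_between k x); auto].
    destruct (Rlt_le_dec x m) as [Hxm|Hxm].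
    + destruct (IVT_interv (fun t => - w t) x m) as [z [Hz1 Hz2]]; auto.
      intros a Ha. apply continuity_pt_opp. apply w_cont; lra. lra. lra.
      apply (no_zero_between k z); auto; lra.
    + destruct Hxm as [Hxm|Hxm]; [|subst; lra].
      destruct (IVT_interv w m x) as [z [Hz1 Hz2]]; auto.
      intros a Ha; apply w_cont; lra.
      apply (no_zero_between k z); auto; lra.
Qed.

Lemma spacing_lower k M : (1 <= k)%nat -> 0 < M ->
  (forall x, j k < x < j (S k) -> q x < M) -> PI / sqrt M <= j (S k) - j k.
Proof.
  intros Hk HM Hq. assert (Hjk := Hj1 k Hk). assert (Hjs := Hj2 k Hk).
  assert (Hjs1 := Hj1 (S k) ltac:(lia)).
  destruct (sign_const k Hk) as [Hp|Hn].
  - apply (sturm_lower w w1 q); auto.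
    intros x Hx; apply Hd1; lra. intros x Hx; apply Hd2; lra. tauto. tauto.
  - apply (sturm_lower (fun t => - w t) (fun t => - w1 t) q); auto.
    intros x Hx; apply isd_opp; apply Hd1; lra.
    intros x Hx. eapply isd_eq. apply isd_opp; apply Hd2; lra. change (q x) with (1 - gam / (x * x)). ring.
    destruct Hjk as [_ H0]; cbv beta; rewrite H0; ring. destruct Hjs1 as [_ H0]; cbv beta; rewrite H0; ring.
    intros x Hx; specialize (Hn x Hx); lra.
Qed.

Lemma spacing_upper k m : (1 <= k)%nat -> 0 < m ->
  (forall x, j k < x < j (S k) -> m <= q x) -> j (S k) - j k <= PI / sqrt m.
Proof.
  intros Hk HM Hq. assert (Hjk := Hj1 k Hk). assert (Hjs := Hj2 k Hk).
  assert (Hjs1 := Hj1 (S k) ltac:(lia)).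
  destruct (sign_const k Hk) as [Hp|Hn].
  - apply (sturm_upper w w1 q); auto.
    intros x Hx; apply Hd1; lra. intros x Hx; apply Hd2; lra. tauto.
  - apply (sturm_upper (fun t => - w t) (fun t => - w1 t) q); auto.
    intros x Hx; apply isd_opp; apply Hd1; lra.
    intros x Hx. eapply isd_eq. apply isd_opp; apply Hd2; lra. change (q x) with (1 - gam / (x * x)). ring.
    destruct Hjk as [_ H0]; cbv beta; rewrite H0; ring.
    intros x Hx; specialize (Hn x Hx); lra.
Qed.

Lemma q_upper x y : 0 < y -> y <= x -> q x < 1 + (Rabs gam + 1) / (y * y).
Proof.
  intros Hy Hx. unfold q.
  assert (0 < y * y) by nra. assert (y * y <= x * x) by nra.
  assert (- gam / (x * x) <= Rabs gam / (y * y)).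
  { apply (Rle_trans _ (Rabs gam / (x * x))).
    unfold Rdiv. apply Rmult_le_compat_r. left; apply Rinv_0_lt_compat; nra.
    rewrite <- Rabs_Ropp. apply Rle_abs.
    unfold Rdiv. apply Rmult_le_compat_l. apply Rabs_pos. apply Rinv_le_contravar; nra. }
  assert (Rabs gam / (y * y) < (Rabs gam + 1) / (y * y)).
  { unfold Rdiv. apply Rmult_lt_compat_r. apply Rinv_0_lt_compat; nra. lra. }
  unfold Rdiv in *. lra.
Qed.

Lemma q_lower x y : 0 < y -> y <= x -> 1 - (Rabs gam + 1) / (y * y) <= q x.
Proof.
  intros Hy Hx. unfold q.
  assert (0 < y * y) by nra. assert (y * y <= x * x) by nra.
  assert (gam / (x * x) <= Rabs gam / (y * y)).
  { apply (Rle_trans _ (Rabs gam / (x * x))).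
    unfold Rdiv. apply Rmult_le_compat_r. left; apply Rinv_0_lt_compat; nra.
    apply Rle_abs.
    unfold Rdiv. apply Rmult_le_compat_l. apply Rabs_pos. apply Rinv_le_contravar; nra. }
  assert (Rabs gam / (y * y) <= (Rabs gam + 1) / (y * y)).
  { unfold Rdiv. apply Rmult_le_compat_r. left; apply Rinv_0_lt_compat; nra. lra. }
  unfold Rdiv in *. lra.
Qed.

Theorem zeros_asym : exists del, 0 < del /\ (forall k, (1 <= k)%nat -> del <= j (S k) - j k) /\
   exists B, forall n, (1 <= n)%nat -> Rabs (j n - PI * INR n) <= B.
Proof.
  assert (Hj1p : 0 < j 1%nat) by (apply Hj1; lia).
  set (G := Rabs gam + 1).
  assert (HG : 0 < G) by (unfold G; assert (H := Rabs_pos gam); lra).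
  set (M0 := 1 + G / (j 1%nat * j 1%nat)).
  assert (HM0 : 0 < M0).
  { unfold M0. assert (0 < G / (j 1%nat * j 1%nat)) by (apply Rdiv_lt_0_compat; nra). lra. }
  set (del := PI / sqrt M0).
  assert (Hdel : 0 < del) by (apply Rdiv_lt_0_compat; [apply PI_RGT_0| apply sqrt_lt_R0; auto]).
  assert (Hsp : forall k, (1 <= k)%nat -> del <= j (S k) - j k).
  { intros k Hk. apply spacing_lower; auto. intros x Hx.
    apply q_upper; auto. assert (H := j_mono 1 k ltac:(lia) Hk). lra. }
  exists del. split; auto. split; auto.
  assert (Hlin : forall k, (1 <= k)%nat -> j 1%nat + (INR k - 1) * del <= j k).
  { intros k Hk. induction Hk. simpl; lra. rewrite S_INR.
    assert (H := Hsp m Hk). lra. }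
  set (c := Rmin (j 1%nat) del).
  assert (Hc : 0 < c) by (apply Rmin_pos; auto).
  assert (Hck : forall k, (1 <= k)%nat -> c * INR k <= j k).
  { intros k Hk. assert (H := Hlin k Hk). assert (H1 : c <= j 1%nat) by apply Rmin_l.
    assert (H2 : c <= del) by apply Rmin_r. assert (H3 : 1 <= INR k) by (apply (le_INR 1); auto).
    assert (c * (INR k - 1) <= del * (INR k - 1)) by (apply Rmult_le_compat_r; lra). nra. }
  set (D := G / (c * c)).
  assert (HD : 0 < D) by (apply Rdiv_lt_0_compat; nra).
  destruct (nat_above (2 * D + 1)) as [K HK].
  assert (HK1 : (1 <= K)%nat).
  { destruct K. simpl in HK. lra. lia. }
  assert (HKpos : 0 < INR K) by (apply lt_0_INR; lia).
  assert (Hstep : forall k, (K <= k)%nat ->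
     Rabs ((j (S k) - PI * INR (S k)) - (j k - PI * INR k)) <= 4 * PI * D * (/ INR k - / INR (S k))).
  { intros k Hk. assert (Hk1 : (1 <= k)%nat) by lia.
    assert (Hkpos : 0 < INR k) by (apply lt_0_INR; lia).
    assert (HkK : INR K <= INR k) by (apply le_INR; auto).
    assert (Hjk := Hck k Hk1). assert (Hjkp : 0 < j k) by nra.
    set (e := G / (j k * j k)).
    assert (He0 : 0 < e) by (apply Rdiv_lt_0_compat; nra).
    assert (HeD : e <= D / (INR k * INR k)).
    { unfold e, D. unfold Rdiv. rewrite Rmult_assoc. apply Rmult_le_compat_l; [lra|].
      rewrite <- Rinv_mult. apply Rinv_le_contravar.
      apply Rmult_lt_0_compat; apply Rmult_lt_0_compat; lra.
      assert (0 <= c * INR k) by (apply Rmult_le_pos; lra).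
      replace (c * c * (INR k * INR k)) with ((c * INR k) * (c * INR k)) by ring.
      apply Rmult_le_compat; lra. }
    assert (HDk : D / (INR k * INR k) <= D / INR k).
    { unfold Rdiv. apply Rmult_le_compat_l; [lra|]. apply Rinv_le_contravar; auto. nra. }
    assert (HDk2 : D / INR k <= 1/2).
    { apply (Rmult_le_reg_r (INR k)); auto. unfold Rdiv. rewrite Rmult_assoc, Rinv_l by lra. lra. }
    assert (Hlo : PI * (1 - e) <= j (S k) - j k).
    { apply (Rle_trans _ (PI / sqrt (1 + e))). apply pi_lower; lra.
      apply spacing_lower; auto. lra. intros x Hx. apply q_upper; lra. }
    assert (Hhi : j (S k) - j k <= PI * (1 + 2 * e)).
    { apply (Rle_trans _ (PI / sqrt (1 - e))).
      apply spacing_upper; auto. lra. intros x Hx. apply q_lower; lra. apply pi_upper; lra. }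
    assert (Hinv : / (INR k * INR k) <= 2 * (/ INR k - / INR (S k))).
    { rewrite S_INR. assert (0 < INR k + 1) by lra.
      replace (/ INR k - / (INR k + 1)) with (/ (INR k * (INR k + 1))) by (field; lra).
      rewrite <- (Rmult_1_l (/ (INR k * INR k))).
      apply (Rmult_le_reg_r (INR k * INR k * (INR k + 1))). nra.
      field_simplify; try lra. }
    assert (HP := PI_RGT_0).
    assert (H2e : 2 * PI * e <= 4 * PI * D * (/ INR k - / INR (S k))).
    { assert (e <= D * / (INR k * INR k)) by exact HeD.
      assert (D * / (INR k * INR k) <= D * (2 * (/ INR k - / INR (S k)))) by (apply Rmult_le_compat_l; lra).
      assert (2 * PI * e <= 2 * PI * (D * (2 * (/ INR k - / INR (S k))))).
      { apply Rmult_le_compat_l; lra. }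
      lra. }
    rewrite S_INR in *.
    replace (j (S k) - PI * (INR k + 1) - (j k - PI * INR k)) with ((j (S k) - j k) - PI) by ring.
    apply Rabs_le. split; nra. }
  assert (Htel : forall t, Rabs ((j (K + t)%nat - PI * INR (K + t)) - (j K - PI * INR K)) <=
                         4 * PI * D * (/ INR K - / INR (K + t))).
  { induction t. rewrite Nat.add_0_r. unfold Rminus at 1 2. rewrite !Rplus_opp_r, Rabs_R0.
    replace (/ INR K - / INR K) with 0 by ring. lra.
    replace (K + S t)%nat with (S (K + t)) by lia.
    assert (H := Hstep (K + t)%nat ltac:(lia)).
    eapply Rle_trans. 2: { apply Req_le. instantiate (1 := 4 * PI * D * (/ INR K - / INR (K + t)) +
         4 * PI * D * (/ INR (K + t) - / INR (S (K + t)))). ring. }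
    eapply Rle_trans. 2: { apply Rplus_le_compat; [exact IHt | exact H]. }
    eapply Rle_trans. 2: apply Rabs_triang. apply Req_le. f_equal. ring. }
  destruct (finite_bound (fun n => j n - PI * INR n) K) as [B0 [HB0 HB]].
  exists (B0 + 4 * PI * D). intros n Hn.
  assert (HP := PI_RGT_0).
  destruct (le_lt_dec n K) as [HnK|HnK].
  - assert (H := HB n HnK). simpl in H. nra.
  - replace n with (K + (n - K))%nat by lia.
    assert (H := Htel (n - K)%nat). assert (H2 := HB K (le_n K)). simpl in H2.
    assert (Hinv : / INR K - / INR (K + (n - K)) <= 1).
    { assert (0 < / INR (K + (n - K))) by (apply Rinv_0_lt_compat; apply lt_0_INR; lia).
      assert (/ INR K <= 1). { rewrite <- Rinv_1. apply Rinv_le_contravar. lra. apply (le_INR 1); auto. }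
      lra. }
    assert (Hr := Rabs_triang ((j (K + (n - K))%nat - PI * INR (K + (n - K))) - (j K - PI * INR K)) (j K - PI * INR K)).
    replace ((j (K + (n - K))%nat - PI * INR (K + (n - K))) - (j K - PI * INR K) + (j K - PI * INR K))
       with (j (K + (n - K))%nat - PI * INR (K + (n - K))) in Hr by ring.
    assert (4 * PI * D * (/ INR K - / INR (K + (n - K))) <= 4 * PI * D * 1).
    { apply Rmult_le_compat_l; auto. assert (0 < 4 * PI * D). { apply Rmult_lt_0_compat; lra. } lra. }
    lra.
Qed.
End Zeros.

Definition gint (y t : R) := exp ((y - 1) * ln t) * exp (- t).

Lemma locally_pos x : 0 < x -> locally x (fun z => 0 < z).
Proof.
  intros Hx. exists (mkposreal x Hx). intros z Hz.
  assert (H : Rabs (z - x) < x) by exact Hz. apply Rabs_def2 in H. simpl in H. lra.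
Qed.

Lemma at_right_small r : 0 < r -> at_right 0 (fun a => 0 < a < r).
Proof.
  intros Hr. unfold at_right, within. exists (mkposreal r Hr). intros z Hz Hp.
  assert (H : Rabs (z - 0) < r) by exact Hz. apply Rabs_def2 in H. simpl in H. lra.
Qed.

Lemma pinf_large r : Rbar_locally p_infty (fun b => r < b).
Proof. exists r. auto. Qed.

Lemma exp_mono x y : x <= y -> exp x <= exp y.
Proof. intros [H|H]. left; apply exp_increasing; auto. subst; lra. Qed.

Lemma gint_cont y t : 0 < t -> continuous (gint y) t.
Proof. intros Ht. apply (@ex_derive_continuous R_AbsRing R_NormedModule). unfold gint. auto_derive. lra. Qed.

Lemma gint_ex y a b : 0 < a -> 0 < b -> ex_RInt (gint y) a b.
Proof.
  intros Ha Hb. apply (@ex_RInt_continuous R_CompleteNormedModule). intros z Hz. apply gint_cont.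
  assert (Rmin a b > 0) by (apply Rmin_glb_lt; auto). lra.
Qed.

Lemma ln_le_2sqrt t : 0 < t -> ln t <= 2 * sqrt t.
Proof.
  intros Ht. assert (Hs : 0 < sqrt t) by (apply sqrt_lt_R0; auto).
  replace (ln t) with (2 * ln (sqrt t)).
  - assert (H := exp_ineq1_le (ln (sqrt t))). rewrite exp_ln in H; auto. lra.
  - rewrite <- (sqrt_sqrt t) at 2 by lra. rewrite ln_mult; auto. ring.
Qed.

Lemma exp_poly_bound Y t : 0 <= Y -> 0 < t -> Y * ln t - t <= 2 * Y * Y - t / 2.
Proof.
  intros HY Ht. assert (H := ln_le_2sqrt t Ht).
  assert (Hs := sqrt_sqrt t ltac:(lra)). assert (Hs0 := sqrt_pos t).
  assert (Y * ln t <= Y * (2 * sqrt t)) by (apply Rmult_le_compat_l; auto).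
  assert (0 <= (Y - sqrt t / 2) * (Y - sqrt t / 2)) by apply Rle_0_sqr.
  assert (2 * Y * sqrt t <= 2 * Y * Y + sqrt t * sqrt t / 2) by nra.
  rewrite Hs in *. lra.
Qed.

Lemma gint_small y t : 1 <= y -> 0 < t <= 1 -> 0 <= gint y t <= 1.
Proof.
  intros Hy Ht. unfold gint. split.
  - apply Rmult_le_pos; left; apply exp_pos.
  - assert (ln t <= 0). { rewrite <- ln_1. apply ln_le; lra. }
    assert (exp ((y - 1) * ln t) <= 1). { rewrite <- exp_0 at 2. apply exp_mono. nra. }
    assert (exp (- t) <= 1). { rewrite <- exp_0. apply exp_mono. lra. }
    assert (0 < exp ((y - 1) * ln t)) by apply exp_pos. assert (0 < exp (- t)) by apply exp_pos.
    nra.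
Qed.

Lemma gint_tail y t : 1 <= y -> 1 <= t -> gint y t <= exp (2 * (y + 1) * (y + 1)) / (t * t).
Proof.
  intros Hy Ht. unfold gint.
  assert (Heq : exp ((y - 1) * ln t) * exp (- t) * (t * t) = exp ((y + 1) * ln t - t)).
  { replace (t * t) with (exp (ln t) * exp (ln t)) by (rewrite exp_ln; lra).
    rewrite <- !exp_plus. f_equal. ring. }
  assert (Hb := exp_poly_bound (y + 1) t ltac:(lra) ltac:(lra)).
  assert (exp ((y + 1) * ln t - t) <= exp (2 * (y + 1) * (y + 1))).
  { apply exp_mono. lra. }
  apply (Rmult_le_reg_r (t * t)). nra.
  rewrite Heq. unfold Rdiv. rewrite Rmult_assoc, Rinv_l by nra. lra.
Qed.

Lemma tail_int y b b' : 1 <= y -> 1 <= b -> b <= b' ->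
  0 <= RInt (gint y) b b' <= exp (2 * (y + 1) * (y + 1)) / b.
Proof.
  intros Hy Hb Hbb. set (C := exp (2 * (y + 1) * (y + 1))).
  assert (HC : 0 < C) by apply exp_pos.
  split.
  - apply RInt_ge_0; auto. apply gint_ex; lra. intros x Hx. unfold gint.
    apply Rmult_le_pos; left; apply exp_pos.
  - assert (Hint : is_RInt (fun t => C / (t * t)) b b' (minus (- C / b') (- C / b))).
    { apply (is_RInt_derive (fun t => - C / t)).
      - intros x Hx. rewrite Rmin_left, Rmax_right in Hx by lra.
        auto_derive. lra. field. lra.
      - intros x Hx. rewrite Rmin_left, Rmax_right in Hx by lra.
        apply (@ex_derive_continuous R_AbsRing R_NormedModule). auto_derive. nra. }
    apply (Rle_trans _ (RInt (fun t => C / (t * t)) b b')).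
    apply RInt_le; auto. apply gint_ex; lra. eexists; exact Hint.
    intros x Hx. apply gint_tail; lra.
    rewrite (is_RInt_unique _ _ _ _ Hint). unfold minus, plus, opp; simpl.
    assert (0 < C / b') by (apply Rdiv_lt_0_compat; lra). unfold Rdiv in *. lra.
Qed.

Lemma tail_abs y b b' : 1 <= y -> 1 <= b -> 1 <= b' ->
  Rabs (RInt (gint y) b b') <= exp (2 * (y + 1) * (y + 1)) / Rmin b b'.
Proof.
  intros Hy Hb Hb'. destruct (Rle_lt_dec b b') as [H|H].
  - rewrite Rmin_left by lra. destruct (tail_int y b b' Hy Hb H). rewrite Rabs_pos_eq; lra.
  - rewrite Rmin_right by lra. destruct (tail_int y b' b Hy Hb' ltac:(lra)).
    rewrite <- opp_RInt_swap. unfold opp; simpl. rewrite Rabs_Ropp, Rabs_pos_eq; lra.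
    apply gint_ex; lra.
Qed.

Lemma head_abs y a a' : 1 <= y -> 0 < a <= 1 -> 0 < a' <= 1 ->
  Rabs (RInt (gint y) a a') <= Rabs (a' - a).
Proof.
  intros Hy Ha Ha'. destruct (Rle_lt_dec a a') as [H|H].
  - assert (Hb := abs_RInt_le_const (gint y) a a' 1 H (gint_ex y a a' ltac:(lra) ltac:(lra))).
    rewrite (Rabs_pos_eq (a' - a)) by lra. rewrite Rmult_1_r in Hb. apply Hb.
    intros t Ht. destruct (gint_small y t Hy ltac:(lra)). rewrite Rabs_pos_eq; lra.
  - assert (Hb := abs_RInt_le_const (gint y) a' a 1 ltac:(lra) (gint_ex y a' a ltac:(lra) ltac:(lra))).
    rewrite (Rabs_left (a' - a)) by lra. rewrite <- opp_RInt_swap. unfold opp; simpl. rewrite Rabs_Ropp.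
    rewrite Rmult_1_r in Hb. replace (- (a' - a)) with (a - a') by ring. apply Hb.
    intros t Ht. destruct (gint_small y t Hy ltac:(lra)). rewrite Rabs_pos_eq; lra.
    apply gint_ex; lra.
Qed.

Lemma gamma_ex y : 1 <= y -> ex_RInt_gen (gint y) (at_right 0) (Rbar_locally p_infty).
Proof.
  intros Hy. unfold ex_RInt_gen, is_RInt_gen.
  assert (HF : ProperFilter (filter_prod (at_right 0) (Rbar_locally p_infty))).
  { apply filter_prod_proper; try apply at_right_proper_filter; try apply Rbar_locally_filter. }
  assert (Hf : filter_prod (at_right 0) (Rbar_locally p_infty) (fun x : R * R =>
     (exists l : R, is_RInt (gint y) (fst x) (snd x) l) /\
     (forall y1 y2 : R, is_RInt (gint y) (fst x) (snd x) y1 -> is_RInt (gint y) (fst x) (snd x) y2 -> y1 = y2))).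
  { apply (Filter_prod _ _ _ (fun a => 0 < a < 1) (fun b => 0 < b)).
    apply at_right_small; lra. apply pinf_large.
    intros a b Ha Hb. simpl. split.
    + exists (RInt (gint y) a b). apply (RInt_correct (V := R_CompleteNormedModule)). apply gint_ex; lra.
    + intros y1 y2 H1 H2. rewrite <- (is_RInt_unique _ _ _ _ H1), <- (is_RInt_unique _ _ _ _ H2). auto. }
  destruct (proj1 (filterlimi_locally_cauchy (U := R_CompleteSpace) (F := filter_prod (at_right 0) (Rbar_locally p_infty))
     (fun ab l => is_RInt (gint y) (fst ab) (snd ab) l) Hf)) as [l Hl].
  2: { exists l; exact Hl. }
  intros eps. set (C := exp (2 * (y + 1) * (y + 1))).
    assert (HC : 0 < C) by apply exp_pos.
    assert (He : 0 < eps) by apply cond_pos.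
    exists (fun ab => 0 < fst ab < Rmin 1 (eps / 3) /\ Rmax 1 (3 * C / eps) < snd ab).
    split.
    + apply (Filter_prod _ _ _ (fun a => 0 < a < Rmin 1 (eps / 3)) (fun b => Rmax 1 (3 * C / eps) < b)).
      apply at_right_small. apply Rmin_pos; lra. apply pinf_large.
      intros a b Ha Hb; simpl; auto.
    + intros [a b] [a' b'] [Ha Hb] [Ha' Hb'] u v Hu Hv. simpl in *.
      assert (Hm1 := Rmin_l 1 (eps / 3)). assert (Hm2 := Rmin_r 1 (eps / 3)).
      assert (HM1 := Rmax_l 1 (3 * C / eps)). assert (HM2 := Rmax_r 1 (3 * C / eps)).
      rewrite <- (is_RInt_unique _ _ _ _ Hu), <- (is_RInt_unique _ _ _ _ Hv).
      change (Rabs (RInt (gint y) a' b' - RInt (gint y) a b) < eps).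
      assert (Hch : RInt (gint y) a' b' = RInt (gint y) a' a + RInt (gint y) a b + RInt (gint y) b b').
      { assert (E1 := RInt_Chasles (V := R_CompleteNormedModule) (gint y) a' b b' (gint_ex y a' b ltac:(lra) ltac:(lra)) (gint_ex y b b' ltac:(lra) ltac:(lra))).
        assert (E2 := RInt_Chasles (V := R_CompleteNormedModule) (gint y) a' a b (gint_ex y a' a ltac:(lra) ltac:(lra)) (gint_ex y a b ltac:(lra) ltac:(lra))).
        unfold plus in E1, E2; simpl in E1, E2. lra. }
      rewrite Hch.
      replace (RInt (gint y) a' a + RInt (gint y) a b + RInt (gint y) b b' - RInt (gint y) a b)
        with (RInt (gint y) a' a + RInt (gint y) b b') by ring.
      eapply Rle_lt_trans. apply Rabs_triang.
      assert (H1 := head_abs y a' a Hy ltac:(lra) ltac:(lra)).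
      assert (H2 := tail_abs y b b' Hy ltac:(lra) ltac:(lra)). fold C in H2.
      assert (Hab : Rabs (a - a') < eps / 3 + eps / 3) by (apply Rabs_def1; lra).
      assert (Hmin : 3 * C / eps < Rmin b b') by (apply Rmin_glb_lt; lra).
      assert (H3 : C / Rmin b b' < eps / 3).
      { assert (0 < 3 * C / eps) by (apply Rdiv_lt_0_compat; lra).
        apply (Rmult_lt_reg_r (Rmin b b')). lra.
        unfold Rdiv. rewrite Rmult_assoc, Rinv_l by lra.
        apply (Rmult_lt_reg_r (3 / eps)). apply Rdiv_lt_0_compat; lra.
        replace (eps * / 3 * Rmin b b' * (3 / eps)) with (Rmin b b') by (field; lra).
        replace (C * 1 * (3 / eps)) with (3 * C / eps) by (field; lra). lra. }
      lra.
Qed.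

Lemma gamma_correct y : 1 <= y -> is_RInt_gen (gint y) (at_right 0) (Rbar_locally p_infty) (Gamma y).
Proof.
  intros Hy. assert (H := RInt_gen_correct (gint y) (gamma_ex y Hy)).
  unfold Gamma. exact H.
Qed.

Lemma Fy_lim0 y : 1 <= y -> filterlim (fun t => exp (y * ln t - t)) (at_right 0) (locally 0).
Proof.
  intros Hy. apply (filterlim_locally (F := at_right 0)). intros eps.
  assert (He : 0 < eps) by apply cond_pos.
  assert (H := at_right_small (Rmin 1 eps) ltac:(apply Rmin_pos; lra)).
  eapply filter_imp; [|exact H]. intros t Ht. simpl.
  assert (Hm1 := Rmin_l 1 eps). assert (Hm2 := Rmin_r 1 eps).
  change (Rabs (exp (y * ln t - t) - 0) < eps).
  assert (Hl : ln t <= 0). { rewrite <- ln_1. apply ln_le; lra. }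
  assert (exp (y * ln t - t) <= exp (ln t)). { apply exp_mono. nra. }
  rewrite exp_ln in H0 by lra. rewrite Rminus_0_r, Rabs_pos_eq. lra. left; apply exp_pos.
Qed.

Lemma Fy_liminf y : 1 <= y -> filterlim (fun t => exp (y * ln t - t)) (Rbar_locally p_infty) (locally 0).
Proof.
  intros Hy. apply (filterlim_locally (F := Rbar_locally p_infty)). intros eps.
  assert (He : 0 < eps) by apply cond_pos.
  set (C := exp (2 * y * y)).
  assert (HC : 0 < C) by apply exp_pos.
  exists (Rmax 1 (2 * C / eps)). intros t Ht.
  assert (HM1 := Rmax_l 1 (2 * C / eps)). assert (HM2 := Rmax_r 1 (2 * C / eps)).
  change (Rabs (exp (y * ln t - t) - 0) < eps).
  rewrite Rminus_0_r, Rabs_pos_eq by (left; apply exp_pos).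
  assert (H1 : exp (y * ln t - t) <= C * exp (- (t / 2))).
  { unfold C. rewrite <- exp_plus. apply exp_mono. assert (H := exp_poly_bound y t ltac:(lra) ltac:(lra)). lra. }
  assert (H2 : exp (- (t / 2)) <= 2 / t).
  { rewrite exp_Ropp. assert (H := exp_ineq1_le (t / 2)). assert (0 < exp (t/2)) by apply exp_pos.
    apply (Rmult_le_reg_r (exp (t / 2) * t)). nra.
    replace (/ exp (t / 2) * (exp (t / 2) * t)) with t by (field; lra).
    replace (2 / t * (exp (t / 2) * t)) with (2 * exp (t / 2)) by (field; lra). lra. }
  assert (H3 : 2 / t < eps / C).
  { apply (Rmult_lt_reg_r (t * C / eps)). apply Rdiv_lt_0_compat; nra.
    replace (2 / t * (t * C / eps)) with (2 * C / eps) by (field; lra).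
    replace (eps / C * (t * C / eps)) with t by (field; lra). lra. }
  assert (H4 : C * exp (- (t / 2)) <= C * (2 / t)) by (apply Rmult_le_compat_l; lra).
  assert (H5 : C * (2 / t) < C * (eps / C)) by (apply Rmult_lt_compat_l; lra).
  replace (C * (eps / C)) with (pos eps) in H5 by (field; lra). lra.
Qed.

Lemma gamma_rec y : 1 <= y -> Gamma (y + 1) = y * Gamma y.
Proof.
  intros Hy.
  set (F := fun t => exp (y * ln t - t)).
  set (dF := fun t => exp (y * ln t - t) * (y / t - 1)).
  assert (HdF : forall t, 0 < t -> is_derive F t (dF t)).
  { intros t Ht. unfold F, dF. auto_derive. lra. unfold Rminus. field. lra. }
  assert (HD : is_RInt_gen (Derive F) (at_right 0) (Rbar_locally p_infty) (0 - 0)).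
  { apply is_RInt_gen_Derive.
    - apply (Filter_prod _ _ _ (fun a => 0 < a < 1) (fun b => 0 < b)).
      apply at_right_small; lra. apply pinf_large.
      intros a b Ha Hb x Hx. simpl in Hx.
      assert (Rmin a b > 0) by (apply Rmin_glb_lt; lra).
      eexists. apply HdF. lra.
    - apply (Filter_prod _ _ _ (fun a => 0 < a < 1) (fun b => 0 < b)).
      apply at_right_small; lra. apply pinf_large.
      intros a b Ha Hb x Hx. simpl in Hx.
      assert (Rmin a b > 0) by (apply Rmin_glb_lt; lra).
      apply (continuous_ext_loc (Derive F) dF).
      + eapply filter_imp; [| apply (locally_pos x); lra].
        intros z Hz. symmetry. apply is_derive_unique. apply HdF; auto.
      + apply (@ex_derive_continuous R_AbsRing R_NormedModule). unfold dF. auto_derive. lra.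
    - apply Fy_lim0; auto.
    - apply Fy_liminf; auto. }
  assert (HG := gamma_correct y Hy).
  assert (H2 := is_RInt_gen_minus _ _ _ _ (is_RInt_gen_scal _ y _ HG) HD).
  assert (E : minus (scal y (Gamma y)) (0 - 0) = y * Gamma y).
  { unfold minus, plus, opp, scal; simpl. unfold mult; simpl. ring. }
  rewrite <- E.
  change (Gamma (y+1)) with (RInt_gen (fun t => Rpower t (y+1-1) * exp(-t)) (at_right 0) (Rbar_locally p_infty)).
  apply is_RInt_gen_unique.
  eapply is_RInt_gen_ext; [| exact H2].
  apply (Filter_prod _ _ _ (fun a => 0 < a < 1) (fun b => 0 < b)).
  apply at_right_small; lra. apply pinf_large.
  intros a b Ha Hb x Hx. simpl in Hx.
  assert (Rmin a b > 0) by (apply Rmin_glb_lt; lra).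
  rewrite (is_derive_unique _ _ _ (HdF x ltac:(lra))).
  unfold scal, minus, plus, opp; simpl. unfold mult; simpl. unfold dF, gint.
  replace (y + 1 - 1) with y by ring.
  unfold Rpower. replace ((y - 1) * ln x) with (y * ln x + - ln x) by ring.
  replace (y * ln x - x) with (y * ln x + - x) by ring.
  rewrite !exp_plus. rewrite (exp_Ropp (ln x)), exp_ln by lra.
  field. lra.
Qed.

Fixpoint bcoef (nu : R) (k : nat) : R :=
  match k with 0%nat => 1 | S k' => - bcoef nu k' / (INR (S k') * (INR k' + nu + 1)) end.

Fixpoint Pk (nu : R) (k : nat) : R :=
  match k with 0%nat => 1 | S k' => Pk nu k' * (INR k' + nu + 1) end.

Lemma Pk_pos nu k : 0 <= nu -> 0 < Pk nu k.
Proof. intros Hn. induction k; simpl. lra. assert (H := pos_INR k). apply Rmult_lt_0_compat; lra. Qed.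

Lemma Gamma_shift nu k : 0 <= nu -> Gamma (INR k + nu + 1) = Gamma (nu + 1) * Pk nu k.
Proof.
  intros Hn. induction k.
  - simpl. replace (0 + nu + 1) with (nu + 1) by ring. ring.
  - rewrite S_INR. replace (INR k + 1 + nu + 1) with ((INR k + nu + 1) + 1) by ring.
    rewrite gamma_rec. rewrite IHk. simpl. ring. assert (H := pos_INR k). lra.
Qed.

Lemma fact_pos k : 0 < INR (Factorial.fact k).
Proof. apply lt_0_INR. apply Factorial.lt_O_fact. Qed.

Lemma bcoef_eq nu k : 0 <= nu -> bcoef nu k = (-1) ^ k / (INR (Factorial.fact k) * Pk nu k).
Proof.
  intros Hn. assert (HP := Pk_pos nu k Hn). assert (HF := fact_pos k). induction k.
  - simpl. field.
  - change (bcoef nu (S k)) with (- bcoef nu k / (INR (S k) * (INR k + nu + 1))).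
    rewrite IHk by (apply Pk_pos || apply fact_pos; auto).
    change (Pk nu (S k)) with (Pk nu k * (INR k + nu + 1)). change ((-1) ^ S k) with (-1 * (-1) ^ k).
    change (Factorial.fact (S k)) with (S k * Factorial.fact k)%nat. rewrite mult_INR.
    assert (Hk := pos_INR k). rewrite S_INR. field. repeat split; try lra.
    apply Rgt_not_eq. apply Pk_pos; auto. apply Rgt_not_eq, fact_pos.
Qed.

Lemma bessel_zero_gamma nu x : 0 <= nu -> Gamma (nu + 1) = 0 -> BesselJ nu x = 0.
Proof.
  intros Hn HG. unfold BesselJ.
  rewrite (Series_ext _ (fun n => 0 * 0)). rewrite Series_scal_l. ring.
  intros n. rewrite Gamma_shift, HG by auto. rewrite Rmult_0_l, Rmult_0_r.
  unfold Rdiv. rewrite Rinv_0. ring.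
Qed.

Lemma bessel_series nu x : 0 <= nu -> Gamma (nu + 1) <> 0 ->
  BesselJ nu x = Rpower (x / 2) nu / Gamma (nu + 1) * PSeries (bcoef nu) (x * x / 4).
Proof.
  intros Hn HG. unfold BesselJ, PSeries. rewrite <- Series_scal_l. apply Series_ext. intros k.
  rewrite bcoef_eq, Gamma_shift by auto. rewrite pow_mult.
  replace ((x / 2) ^ 2) with (x * x / 4) by field.
  assert (HP := Pk_pos nu k Hn). assert (HF := fact_pos k).
  field. repeat split; lra.
Qed.

Lemma bcoef_nz nu k : 0 <= nu -> bcoef nu k <> 0.
Proof.
  intros Hn. rewrite bcoef_eq by auto. assert (HP := Pk_pos nu k Hn). assert (HF := fact_pos k).
  unfold Rdiv. apply Rmult_integral_contrapositive. split. apply pow_nonzero. lra.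
  apply Rinv_neq_0_compat. nra.
Qed.

Lemma bcoef_radius nu : 0 <= nu -> CV_radius (bcoef nu) = p_infty.
Proof.
  intros Hn. apply CV_radius_infinite_DAlembert. intros; apply bcoef_nz; auto.
  apply (is_lim_seq_le_le (fun _ => 0) _ (fun n => / INR (S n))).
  - intros n. change (bcoef nu (S n)) with (- bcoef nu n / (INR (S n) * (INR n + nu + 1))). assert (Hb := bcoef_nz nu n Hn). assert (Hk := pos_INR n).
    replace (- bcoef nu n / (INR (S n) * (INR n + nu + 1)) / bcoef nu n) with (- / (INR (S n) * (INR n + nu + 1))).
    2: { rewrite S_INR. field. repeat split; lra. }
    rewrite Rabs_Ropp. rewrite Rabs_pos_eq. split.
    left; apply Rinv_0_lt_compat. rewrite S_INR; nra.
    apply Rinv_le_contravar. rewrite S_INR; lra. rewrite S_INR; nra.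
    left; apply Rinv_0_lt_compat. rewrite S_INR; nra.
  - apply is_lim_seq_const.
  - replace (Finite 0) with (Rbar_inv p_infty) by reflexivity.
    apply (is_lim_seq_inv (fun n => INR (S n))). apply (is_lim_seq_incr_1 INR p_infty).
    apply is_lim_seq_INR. discriminate.
Qed.

Section ODE.
Variable nu : R.
Hypothesis Hnu : 0 <= nu.
Let b := bcoef nu.
Let h t := PSeries b t.
Let h1 t := PSeries (PS_derive b) t.
Let h2 t := PSeries (PS_derive (PS_derive b)) t.

Lemma rad_b t : Rbar_lt (Rabs t) (CV_radius b).
Proof. unfold b. rewrite bcoef_radius; simpl; auto. Qed.
Lemma rad_b1 t : Rbar_lt (Rabs t) (CV_radius (PS_derive b)).
Proof. rewrite CV_radius_derive. apply rad_b. Qed.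
Lemma rad_b2 t : Rbar_lt (Rabs t) (CV_radius (PS_derive (PS_derive b))).
Proof. rewrite !CV_radius_derive. apply rad_b. Qed.

Lemma dh t : is_derive h t (h1 t).
Proof. apply is_derive_PSeries. apply rad_b. Qed.
Lemma dh1 t : is_derive h1 t (h2 t).
Proof. apply is_derive_PSeries. apply rad_b1. Qed.

Lemma ode_h t : t * h2 t + (nu + 1) * h1 t + h t = 0.
Proof.
  unfold h, h1, h2. rewrite <- PSeries_incr_1, <- PSeries_scal.
  rewrite <- PSeries_plus, <- PSeries_plus.
  all: try solve [repeat first [apply ex_pseries_plus | apply ex_pseries_incr_1 | apply ex_pseries_scal
     | apply CV_radius_inside, rad_b2 | apply CV_radius_inside, rad_b1 | apply CV_radius_inside, rad_b | apply Rmult_comm]].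
  rewrite (PSeries_ext _ (fun _ => 0)).
  + unfold PSeries. rewrite (Series_ext _ (fun n => 0 * 0)). rewrite Series_scal_l. ring.
    intros; ring.
  + intros n. unfold PS_plus, PS_scal, PS_incr_1, plus, scal, zero; simpl. unfold mult; simpl.
    unfold PS_derive. destruct n as [|m].
    * unfold b. change (bcoef nu 1) with (- bcoef nu 0 / (INR 1 * (INR 0 + nu + 1))).
      simpl. field. lra.
    * unfold b. change (bcoef nu (S (S m))) with (- bcoef nu (S m) / (INR (S (S m)) * (INR (S m) + nu + 1))).
      assert (Hm := pos_INR m). rewrite !S_INR. field. split; lra.
Qed.

Let p := nu + 1 / 2.
Let HH x := h (x * x / 4).
Let HH1 x := x / 2 * h1 (x * x / 4).
Definition wsol x := exp (p * ln x) * HH x.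
Definition wsol1 x := exp (p * ln x) * (p / x * HH x + HH1 x).

Lemma dHH x : is_derive HH x (HH1 x).
Proof.
  unfold HH, HH1. eapply isd_eq. apply (isd_comp h (fun t => t * t / 4)).
  apply dh. auto_derive; auto. simpl. field.
Qed.

Lemma dHH1 x : is_derive HH1 x (1 / 2 * h1 (x * x / 4) + x / 2 * (x / 2 * h2 (x * x / 4))).
Proof.
  unfold HH1. eapply isd_eq. apply isd_mult. auto_derive; auto.
  eapply isd_eq. apply (isd_comp h1 (fun t => t * t / 4)). apply dh1. auto_derive; auto.
  reflexivity. simpl. field.
Qed.

Lemma dw x : 0 < x -> is_derive wsol x (wsol1 x).
Proof.
  intros Hx. unfold wsol, wsol1. eapply isd_eq. apply isd_mult.
  auto_derive. lra. reflexivity. apply dHH. simpl. field. lra.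
Qed.

Lemma dw1 x : 0 < x -> is_derive wsol1 x (- (1 - (nu * nu - 1 / 4) / (x * x)) * wsol x).
Proof.
  intros Hx. unfold wsol, wsol1. eapply isd_eq. apply isd_mult.
  auto_derive. lra. reflexivity.
  apply isd_plus. apply isd_mult. auto_derive. lra. reflexivity. apply dHH. apply dHH1.
  assert (Hode := ode_h (x * x / 4)).
  unfold HH1, HH, p. simpl.
  replace (h2 (x * x / 4)) with ((- (nu + 1) * h1 (x * x / 4) - h (x * x / 4)) / (x * x / 4)).
  field. lra.
  field_simplify_eq. lra. nra.
Qed.

Lemma wsol_zero x : 0 < x -> Gamma (nu + 1) <> 0 -> (BesselJ nu x = 0 <-> wsol x = 0).
Proof.
  intros Hx HG. rewrite bessel_series by auto. unfold wsol, HH, h, b.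
  assert (H1 : 0 < Rpower (x / 2) nu) by (unfold Rpower; apply exp_pos).
  assert (H2 : 0 < exp (p * ln x)) by apply exp_pos.
  split; intros H.
  - apply Rmult_integral in H. destruct H as [H|H].
    + exfalso. unfold Rdiv in H. apply Rmult_integral in H. destruct H as [H|H]. lra.
      apply Rinv_neq_0_compat in HG. auto.
    + rewrite H; ring.
  - apply Rmult_integral in H. destruct H as [H|H]. lra. rewrite H; ring.
Qed.
End ODE.

Theorem bessel_asym nu (j : nat -> R) : 0 <= nu -> is_pos_zeros_enum (BesselJ nu) j ->
  exists del, 0 < del /\ (forall k, (1 <= k)%nat -> del <= j (S k) - j k) /\
   exists B, forall n, (1 <= n)%nat -> Rabs (j n - PI * INR n) <= B.
Proof.
  intros Hn [Hj1 [Hj2 Hj3]].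
  destruct (Req_dec (Gamma (nu + 1)) 0) as [HG|HG].
  - exfalso. destruct (Hj1 1%nat (le_n 1)) as [H1 _]. assert (H2 := Hj2 1%nat (le_n 1)).
    set (x := (j 1%nat + j 2%nat) / 2).
    destruct (Hj3 x) as [n [Hn1 Hn2]]. unfold x; lra. apply bessel_zero_gamma; auto.
    destruct n as [|[|n]]. lia. unfold x in Hn2; lra.
    assert (H3 : j 2%nat <= j (S (S n))).
    { clear Hn2 Hn1. induction n. lra. assert (H4 := Hj2 (S (S n)) ltac:(lia)). lra. }
    unfold x in Hn2. lra.
  - apply (zeros_asym (wsol nu) (wsol1 nu) (nu * nu - 1 / 4) j).
    + apply dw; auto.
    + apply dw1; auto.
    + intros n Hn1. destruct (Hj1 n Hn1) as [H1 H2]. split; auto. apply wsol_zero; auto.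
    + auto.
    + intros x Hx Hw. apply Hj3; auto. apply (wsol_zero nu Hn x Hx HG). auto.
Qed.

Lemma abs_le_split a b : Rabs a <= b -> - b <= a <= b.
Proof. intros H. assert (H1 := Rle_abs a). assert (H2 := Rle_abs (- a)). rewrite Rabs_Ropp in H2. lra. Qed.

Section Merge.
Variables (X Y : nat -> C) (kappa B : R).
Hypothesis Hk : 0 < kappa.
Hypothesis HXm : forall i, (1 <= i)%nat -> Cmod (X i) <= Cmod (X (S i)).
Hypothesis HYm : forall i, (1 <= i)%nat -> Cmod (Y i) <= Cmod (Y (S i)).
Hypothesis HXe : forall i, (1 <= i)%nat -> Rabs (sqrt (Cmod (X i)) - kappa * INR i) <= B.
Hypothesis HYe : forall i, (1 <= i)%nat -> Rabs (sqrt (Cmod (Y i)) - kappa * INR i) <= B.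
Hypothesis HXi : forall i i', (1 <= i)%nat -> (1 <= i')%nat -> X i = X i' -> i = i'.
Hypothesis HYi : forall i i', (1 <= i)%nat -> (1 <= i')%nat -> Y i = Y i' -> i = i'.
Hypothesis HXY : forall i k, (1 <= i)%nat -> (1 <= k)%nat -> X i <> Y k.

Fixpoint st (n : nat) : nat * nat :=
  match n with
  | 0%nat => (1%nat, 1%nat)
  | S n => let (i, k) := st n in
           if Rle_dec (Cmod (X i)) (Cmod (Y k)) then (S i, k) else (i, S k)
  end.

Definition pick (n : nat) : C :=
  let (i, k) := st n in if Rle_dec (Cmod (X i)) (Cmod (Y k)) then X i else Y k.

Lemma XmonoG i i' : (1 <= i)%nat -> (i <= i')%nat -> Cmod (X i) <= Cmod (X i').
Proof. intros H1 H2. induction H2. lra. assert (H := HXm m ltac:(lia)). lra. Qed.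
Lemma YmonoG i i' : (1 <= i)%nat -> (i <= i')%nat -> Cmod (Y i) <= Cmod (Y i').
Proof. intros H1 H2. induction H2. lra. assert (H := HYm m ltac:(lia)). lra. Qed.

Lemma st_cases n i k : st n = (i, k) ->
  (Cmod (X i) <= Cmod (Y k) /\ st (S n) = (S i, k) /\ pick n = X i) \/
  (Cmod (Y k) < Cmod (X i) /\ st (S n) = (i, S k) /\ pick n = Y k).
Proof.
  intros Hs. simpl. unfold pick. rewrite Hs.
  destruct (Rle_dec (Cmod (X i)) (Cmod (Y k))) as [H|H].
  left; auto. right; split; auto. lra.
Qed.

Lemma st_inv n : let (i, k) := st n in
  (1 <= i)%nat /\ (1 <= k)%nat /\ (i + k = n + 2)%nat /\
  ((1 < i)%nat -> Cmod (X (pred i)) <= Cmod (Y k)) /\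
  ((1 < k)%nat -> Cmod (Y (pred k)) <= Cmod (X i)).
Proof.
  induction n.
  - simpl. repeat split; try lia.
  - destruct (st n) as [i k] eqn:Hs. destruct IHn as [Hi [Hk' [Hsum [I1 I2]]]].
    destruct (st_cases n i k Hs) as [[Hle [Hst _]]|[Hlt [Hst _]]]; rewrite Hst.
    + repeat split; try lia.
      * intros _. simpl. auto.
      * intros H. assert (H1 := I2 H). assert (H2 := HXm i Hi). lra.
    + repeat split; try lia.
      * intros H. assert (H1 := I1 H). assert (H2 := HYm k Hk'). lra.
      * intros _. simpl. lra.
Qed.

Lemma pick_mod n : let (i, k) := st n in Cmod (pick n) = Rmin (Cmod (X i)) (Cmod (Y k)).
Proof.
  destruct (st n) as [i k] eqn:Hs.
  destruct (st_cases n i k Hs) as [[Hle [_ Hp]]|[Hlt [_ Hp]]]; rewrite Hp.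
  rewrite Rmin_left; auto. rewrite Rmin_right; lra.
Qed.

Lemma pick_mono n : Cmod (pick n) <= Cmod (pick (S n)).
Proof.
  assert (H1 := pick_mod n). assert (H2 := pick_mod (S n)). assert (I := st_inv n).
  destruct (st n) as [i k] eqn:Hs. destruct I as [Hi [Hk' _]].
  destruct (st_cases n i k Hs) as [[Hle [Hst _]]|[Hlt [Hst _]]]; rewrite Hst in H2; rewrite H1, H2.
  - assert (H := HXm i Hi). apply Rmin_glb. apply (Rle_trans _ (Cmod (X i))). apply Rmin_l. lra. apply Rmin_r.
  - assert (H := HYm k Hk'). apply Rmin_glb. apply Rmin_l. apply (Rle_trans _ (Cmod (Y k))). apply Rmin_r. lra.
Qed.

Lemma B_nonneg : 0 <= B.
Proof. assert (H := HXe 1 (le_n 1)). assert (H2 := Rabs_pos (sqrt (Cmod (X 1%nat)) - kappa * INR 1)). lra. Qed.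

Lemma sqrt_mono x y : x <= y -> sqrt x <= sqrt y.
Proof. apply sqrt_le_1_alt. Qed.

Lemma pick_est n : Rabs (2 / kappa * sqrt (Cmod (pick n)) - INR (S n)) <= 1 + 2 * B / kappa.
Proof.
  assert (H1 := pick_mod n). assert (I := st_inv n). assert (HB := B_nonneg).
  destruct (st n) as [i k] eqn:Hs. destruct I as [Hi [Hk' [Hsum [I1 I2]]]].
  set (mu := Cmod (pick n)).
  assert (Hmu0 : 0 <= mu) by apply Cmod_ge_0.
  assert (HXi' := HXe i Hi). assert (HYk := HYe k Hk').
  apply abs_le_split in HXi'. apply abs_le_split in HYk.
  assert (Hup1 : sqrt mu <= kappa * INR i + B).
  { assert (sqrt mu <= sqrt (Cmod (X i))). { apply sqrt_mono. unfold mu; rewrite H1. apply Rmin_l. } lra. }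
  assert (Hup2 : sqrt mu <= kappa * INR k + B).
  { assert (sqrt mu <= sqrt (Cmod (Y k))). { apply sqrt_mono. unfold mu; rewrite H1. apply Rmin_r. } lra. }
  assert (Hlo1 : kappa * (INR i - 1) - B <= sqrt mu).
  { destruct (Rle_dec (Cmod (X i)) (Cmod (Y k))) as [Hc|Hc].
    - assert (sqrt (Cmod (X i)) <= sqrt mu). { apply sqrt_mono. unfold mu; rewrite H1, Rmin_left; lra. } lra.
    - destruct (Nat.eq_dec i 1) as [->|Hne].
      + simpl. assert (0 <= sqrt mu) by apply sqrt_pos. lra.
      + assert (Hp := I1 ltac:(lia)).
        assert (Hpi : (1 <= pred i)%nat) by lia.
        assert (HXp := HXe (pred i) Hpi). apply abs_le_split in HXp.
        replace (INR (pred i)) with (INR i - 1) in HXp.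
        2: { destruct i. lia. simpl pred. rewrite S_INR. ring. }
        assert (sqrt (Cmod (X (pred i))) <= sqrt mu). { apply sqrt_mono. unfold mu; rewrite H1, Rmin_right; lra. } lra. }
  assert (Hlo2 : kappa * (INR k - 1) - B <= sqrt mu).
  { destruct (Rle_dec (Cmod (X i)) (Cmod (Y k))) as [Hc|Hc].
    - destruct (Nat.eq_dec k 1) as [->|Hne].
      + simpl. assert (0 <= sqrt mu) by apply sqrt_pos. lra.
      + assert (Hp := I2 ltac:(lia)).
        assert (Hpi : (1 <= pred k)%nat) by lia.
        assert (HYp := HYe (pred k) Hpi). apply abs_le_split in HYp.
        replace (INR (pred k)) with (INR k - 1) in HYp.
        2: { destruct k. lia. simpl pred. rewrite S_INR. ring. }
        assert (sqrt (Cmod (Y (pred k))) <= sqrt mu). { apply sqrt_mono. unfold mu; rewrite H1, Rmin_left; lra. } lra.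
    - assert (sqrt (Cmod (Y k)) <= sqrt mu). { apply sqrt_mono. unfold mu; rewrite H1, Rmin_right; lra. } lra. }
  assert (Hs2 : INR i + INR k = INR n + 2).
  { rewrite <- plus_INR, Hsum, plus_INR. simpl. ring. }
  rewrite S_INR.
  assert (E : 2 / kappa * sqrt mu - (INR n + 1) = (2 * sqrt mu - kappa * (INR n + 1)) / kappa) by (field; lra).
  fold mu. rewrite E. unfold Rdiv. rewrite Rabs_mult, (Rabs_pos_eq (/ kappa)) by (left; apply Rinv_0_lt_compat; auto).
  apply (Rmult_le_reg_r kappa); auto. rewrite Rmult_assoc, Rinv_l by lra.
  replace ((1 + 2 * B * / kappa) * kappa) with (kappa + 2 * B) by (field; lra).
  rewrite Rmult_1_r. apply Rabs_le. split; nra.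
Qed.

Lemma fst_mono n m : (n <= m)%nat -> (fst (st n) <= fst (st m))%nat.
Proof.
  intros H. induction H. lia. destruct (st m) as [i k] eqn:Hs.
  destruct (st_cases m i k Hs) as [[_ [Hst _]]|[_ [Hst _]]]; rewrite Hst; simpl in *; lia.
Qed.
Lemma snd_mono n m : (n <= m)%nat -> (snd (st n) <= snd (st m))%nat.
Proof.
  intros H. induction H. lia. destruct (st m) as [i k] eqn:Hs.
  destruct (st_cases m i k Hs) as [[_ [Hst _]]|[_ [Hst _]]]; rewrite Hst; simpl in *; lia.
Qed.

Lemma pick_inj n m : pick n = pick m -> n = m.
Proof.
  intros Heq. destruct (Nat.lt_total n m) as [Hlt|[Heq'|Hlt]]; auto; exfalso.
  - assert (In := st_inv n). assert (Im := st_inv m).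
    destruct (st n) as [i k] eqn:Hn. destruct (st m) as [i' k'] eqn:Hm.
    destruct In as [Hi [Hk1 _]]. destruct Im as [Hi' [Hk1' _]].
    assert (F := fst_mono (S n) m Hlt). assert (S2 := snd_mono (S n) m Hlt).
    rewrite Hm in F, S2.
    destruct (st_cases n i k Hn) as [[_ [Hst Hp]]|[_ [Hst Hp]]];
    destruct (st_cases m i' k' Hm) as [[_ [_ Hp']]|[_ [_ Hp']]];
    rewrite Hst in F, S2; simpl in F, S2; rewrite Hp, Hp' in Heq.
    + assert (i = i') by (apply HXi; auto). lia.
    + apply (HXY i k'); auto.
    + apply (HXY i' k); auto.
    + assert (k = k') by (apply HYi; auto). lia.
  - assert (In := st_inv n). assert (Im := st_inv m).
    destruct (st n) as [i k] eqn:Hn. destruct (st m) as [i' k'] eqn:Hm.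
    destruct In as [Hi [Hk1 _]]. destruct Im as [Hi' [Hk1' _]].
    assert (F := fst_mono (S m) n Hlt). assert (S2 := snd_mono (S m) n Hlt).
    rewrite Hn in F, S2.
    destruct (st_cases m i' k' Hm) as [[_ [Hst Hp]]|[_ [Hst Hp]]];
    destruct (st_cases n i k Hn) as [[_ [_ Hp']]|[_ [_ Hp']]];
    rewrite Hst in F, S2; simpl in F, S2; rewrite Hp, Hp' in Heq.
    + assert (i' = i) by (apply HXi; auto). lia.
    + apply (HXY i' k); auto.
    + apply (HXY i k'); auto.
    + assert (k' = k) by (apply HYi; auto). lia.
Qed.

Lemma pick_range n : (exists i, (1 <= i)%nat /\ pick n = X i) \/ (exists k, (1 <= k)%nat /\ pick n = Y k).
Proof.
  assert (I := st_inv n). destruct (st n) as [i k] eqn:Hs. destruct I as [Hi [Hk1 _]].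
  destruct (st_cases n i k Hs) as [[_ [_ Hp]]|[_ [_ Hp]]]; [left; exists i | right; exists k]; auto.
Qed.

Lemma sqrt_lower_X i : (1 <= i)%nat -> kappa * INR i - B <= sqrt (Cmod (X i)).
Proof. intros H. assert (H1 := HXe i H). apply abs_le_split in H1. lra. Qed.
Lemma sqrt_lower_Y i : (1 <= i)%nat -> kappa * INR i - B <= sqrt (Cmod (Y i)).
Proof. intros H. assert (H1 := HYe i H). apply abs_le_split in H1. lra. Qed.

Lemma nat_above' (x : R) : exists n : nat, x < INR n.
Proof.
  destruct (archimed x) as [H1 _].
  destruct (Z.lt_ge_cases (up x) 0) as [Hz|Hz].
  - exists 0%nat. simpl. apply IZR_lt in Hz. lra.
  - exists (Z.to_nat (up x)). rewrite INR_IZR_INZ, Z2Nat.id; [lra|lia].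
Qed.

Lemma X_hit i : (1 <= i)%nat -> exists n, pick n = X i.
Proof.
  intros Hi. destruct (nat_above' ((sqrt (Cmod (X i)) + B) / kappa)) as [K HK].
  assert (HK1 : (1 <= K)%nat).
  { destruct K; [|lia]. exfalso. simpl in HK. assert (HB := B_nonneg).
    assert (0 <= (sqrt (Cmod (X i)) + B) / kappa). { apply Rdiv_le_0_compat; auto. assert (H0 := sqrt_pos (Cmod (X i))). lra. } lra. }
  assert (Hbound : forall n, (fst (st n) <= i)%nat -> (snd (st n) <= K)%nat).
  { intros n Hn. assert (I := st_inv n). destruct (st n) as [i' k'] eqn:Hs. simpl in *.
    destruct I as [Hi' [Hk' [_ [_ I2]]]].
    destruct (le_lt_dec k' K) as [H|H]; auto. exfalso.
    assert (Hp := I2 ltac:(lia)).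
    assert (Hm := XmonoG i' i Hi' Hn).
    assert (Hl := sqrt_lower_Y (pred k') ltac:(lia)).
    assert (HpK : INR K <= INR (pred k')) by (apply le_INR; lia).
    assert (sqrt (Cmod (Y (pred k'))) <= sqrt (Cmod (X i))) by (apply sqrt_mono; lra).
    apply (Rmult_lt_compat_l kappa) in HK; auto.
    replace (kappa * ((sqrt (Cmod (X i)) + B) / kappa)) with (sqrt (Cmod (X i)) + B) in HK by (field; lra).
    nra. }
  assert (Hbig : (i < fst (st (i + K)))%nat).
  { assert (I := st_inv (i + K)). destruct (st (i + K)) as [i' k'] eqn:Hs. simpl.
    destruct I as [_ [_ [Hsum _]]].
    destruct (le_lt_dec i' i) as [H|H]; auto.
    assert (H2 := Hbound (i + K)%nat). rewrite Hs in H2. simpl in H2. specialize (H2 H). lia. }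
  assert (Hcross : forall N, (i < fst (st N))%nat -> exists n, fst (st n) = i /\ fst (st (S n)) = S i).
  { induction N; intros HN. simpl in HN. lia.
    destruct (le_lt_dec (fst (st N)) i) as [H|H].
    - exists N. destruct (st N) as [a c] eqn:Hs. simpl in H.
      destruct (st_cases N a c Hs) as [[_ [Hst _]]|[_ [Hst _]]]; rewrite Hst in HN |- *; simpl in *; split; lia.
    - apply IHN; auto. }
  destruct (Hcross _ Hbig) as [n [H1 H2]]. exists n.
  destruct (st n) as [a c] eqn:Hs. simpl in H1. subst a.
  destruct (st_cases n i c Hs) as [[_ [Hst Hp]]|[_ [Hst Hp]]]; rewrite Hst in H2; simpl in H2; auto. lia.
Qed.

Lemma Y_hit k : (1 <= k)%nat -> exists n, pick n = Y k.
Proof.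
  intros Hk1. destruct (nat_above' ((sqrt (Cmod (Y k)) + B) / kappa)) as [K HK].
  assert (HK1 : (1 <= K)%nat).
  { destruct K; [|lia]. exfalso. simpl in HK. assert (HB := B_nonneg).
    assert (0 <= (sqrt (Cmod (Y k)) + B) / kappa). { apply Rdiv_le_0_compat; auto. assert (H0 := sqrt_pos (Cmod (Y k))). lra. } lra. }
  assert (Hbound : forall n, (snd (st n) <= k)%nat -> (fst (st n) <= K)%nat).
  { intros n Hn. assert (I := st_inv n). destruct (st n) as [i' k'] eqn:Hs. simpl in *.
    destruct I as [Hi' [Hk' [_ [I1 _]]]].
    destruct (le_lt_dec i' K) as [H|H]; auto. exfalso.
    assert (Hp := I1 ltac:(lia)).
    assert (Hm := YmonoG k' k Hk' Hn).
    assert (Hl := sqrt_lower_X (pred i') ltac:(lia)).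
    assert (HpK : INR K <= INR (pred i')) by (apply le_INR; lia).
    assert (sqrt (Cmod (X (pred i'))) <= sqrt (Cmod (Y k))) by (apply sqrt_mono; lra).
    apply (Rmult_lt_compat_l kappa) in HK; auto.
    replace (kappa * ((sqrt (Cmod (Y k)) + B) / kappa)) with (sqrt (Cmod (Y k)) + B) in HK by (field; lra).
    nra. }
  assert (Hbig : (k < snd (st (k + K)))%nat).
  { assert (I := st_inv (k + K)). destruct (st (k + K)) as [i' k'] eqn:Hs. simpl.
    destruct I as [_ [_ [Hsum _]]].
    destruct (le_lt_dec k' k) as [H|H]; auto.
    assert (H2 := Hbound (k + K)%nat). rewrite Hs in H2. simpl in H2. specialize (H2 H). lia. }
  assert (Hcross : forall N, (k < snd (st N))%nat -> exists n, snd (st n) = k /\ snd (st (S n)) = S k).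
  { induction N; intros HN. simpl in HN. lia.
    destruct (le_lt_dec (snd (st N)) k) as [H|H].
    - exists N. destruct (st N) as [a c] eqn:Hs. simpl in H.
      destruct (st_cases N a c Hs) as [[_ [Hst _]]|[_ [Hst _]]]; rewrite Hst in HN |- *; simpl in *; split; lia.
    - apply IHN; auto. }
  destruct (Hcross _ Hbig) as [n [H1 H2]]. exists n.
  destruct (st n) as [a c] eqn:Hs. simpl in H1. subst c.
  destruct (st_cases n a k Hs) as [[_ [Hst Hp]]|[_ [Hst Hp]]]; rewrite Hst in H2; simpl in H2; auto. lia.
Qed.

End Merge.

Theorem merge_seq (X Y : nat -> C) (kappa B : R) : 0 < kappa ->
  (forall i, (1 <= i)%nat -> Cmod (X i) <= Cmod (X (S i))) ->
  (forall i, (1 <= i)%nat -> Cmod (Y i) <= Cmod (Y (S i))) ->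
  (forall i, (1 <= i)%nat -> Rabs (sqrt (Cmod (X i)) - kappa * INR i) <= B) ->
  (forall i, (1 <= i)%nat -> Rabs (sqrt (Cmod (Y i)) - kappa * INR i) <= B) ->
  (forall i i', (1 <= i)%nat -> (1 <= i')%nat -> X i = X i' -> i = i') ->
  (forall i i', (1 <= i)%nat -> (1 <= i')%nat -> Y i = Y i' -> i = i') ->
  (forall i k, (1 <= i)%nat -> (1 <= k)%nat -> X i <> Y k) ->
  exists Lam : nat -> C,
    (forall z, (exists n, (1 <= n)%nat /\ Lam n = z) <-> (exists n, (1 <= n)%nat /\ (z = X n \/ z = Y n))) /\
    (forall n m, (1 <= n)%nat -> (1 <= m)%nat -> Lam n = Lam m -> n = m) /\
    (forall n, (1 <= n)%nat -> Cmod (Lam n) <= Cmod (Lam (S n))) /\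
    (forall n, (1 <= n)%nat -> Rabs (2 / kappa * sqrt (Cmod (Lam n)) - INR n) <= 1 + 2 * B / kappa).
Proof.
  intros Hk HXm HYm HXe HYe HXi HYi HXY.
  exists (fun n => match n with 0%nat => RtoC 0 | S n => pick X Y n end).
  split; [|split; [|split]].
  - intros z. split.
    + intros [n [Hn Hz]]. destruct n. lia. subst z.
      destruct (pick_range X Y HXm HYm n) as [[i [Hi Hp]]|[k [Hk' Hp]]]; rewrite Hp.
      exists i; auto. exists k; auto.
    + intros [n [Hn [Hz|Hz]]]; subst z.
      * assert (Hh : exists m, pick X Y m = X n) by (eapply X_hit; eauto). destruct Hh as [m Hm]. exists (S m); split; auto. lia.
      * assert (Hh : exists m, pick X Y m = Y n) by (eapply Y_hit; eauto). destruct Hh as [m Hm]. exists (S m); split; auto. lia.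
  - intros n m Hn Hm Heq. destruct n; [lia|]. destruct m; [lia|].
    f_equal. apply (pick_inj X Y HXm HYm HXi HYi HXY); auto.
  - intros n Hn. destruct n; [lia|]. apply (pick_mono X Y HXm HYm).
  - intros n Hn. destruct n; [lia|]. apply (pick_est X Y kappa B Hk HXm HYm HXe HYe).
Qed.

Lemma Cminus_plus (a b : C) : Cplus (Cminus a b) b = a.
Proof. destruct a as [a1 a2], b as [b1 b2]. unfold Cminus, Cplus, Copp; simpl. f_equal; ring. Qed.

Lemma Cmod_minus_sym (a b : C) : Cmod (Cminus a b) = Cmod (Cminus b a).
Proof.
  replace (Cminus b a) with (Copp (Cminus a b)). apply eq_sym, Cmod_opp.
  destruct a as [a1 a2], b as [b1 b2]. unfold Cminus, Cplus, Copp; simpl. f_equal; ring.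
Qed.

Lemma Cmod_rev_tri (a b : C) : Cmod a - Cmod b <= Cmod (Cminus a b).
Proof.
  assert (H := Cmod_triangle (Cminus a b) b). rewrite Cminus_plus in H. lra.
Qed.

Section Assemble.
Variables (Lam : nat -> C) (p s0 : R).
Hypothesis Hp : 0 < p.
Hypothesis Hs0 : 0 <= s0.
Hypothesis Hmono : forall n, (1 <= n)%nat -> Cmod (Lam n) <= Cmod (Lam (S n)).
Hypothesis Hest : forall n, (1 <= n)%nat -> Rabs (p * sqrt (Cmod (Lam n)) - INR n) <= s0.

Lemma monoG n m : (1 <= n)%nat -> (n <= m)%nat -> Cmod (Lam n) <= Cmod (Lam m).
Proof. intros H1 H2. induction H2. lra. assert (H := Hmono m ltac:(lia)). lra. Qed.

Lemma est_lo n : (1 <= n)%nat -> INR n - s0 <= p * sqrt (Cmod (Lam n)).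
Proof. intros H. assert (H1 := Hest n H). apply abs_le_split in H1. lra. Qed.
Lemma est_hi n : (1 <= n)%nat -> p * sqrt (Cmod (Lam n)) <= INR n + s0.
Proof. intros H. assert (H1 := Hest n H). apply abs_le_split in H1. lra. Qed.

Lemma sep_far (q : nat) n m : INR q > 4 * s0 + 1 -> (1 <= m)%nat -> (m + q <= n)%nat ->
  Cmod (Cminus (Lam n) (Lam m)) >= 1 / (2 * p * p) * Rabs (INR n ^ 2 - INR m ^ 2).
Proof.
  intros Hq Hm Hn.
  assert (Hn1 : (1 <= n)%nat) by lia.
  assert (Hlo := est_lo n Hn1). assert (Hhi := est_hi m Hm).
  assert (Hnm : INR m + INR q <= INR n) by (rewrite <- plus_INR; apply le_INR; lia).
  assert (Hm0 : 1 <= INR m) by (apply (le_INR 1); auto).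
  set (a := sqrt (Cmod (Lam n))). set (b := sqrt (Cmod (Lam m))).
  assert (Ha : a * a = Cmod (Lam n)) by (apply sqrt_sqrt, Cmod_ge_0).
  assert (Hb : b * b = Cmod (Lam m)) by (apply sqrt_sqrt, Cmod_ge_0).
  assert (Hb0 : 0 <= b) by apply sqrt_pos.
  fold a in Hlo. fold b in Hhi.
  assert (H1 : INR n - s0 > INR m + s0) by lra.
  assert (Hpb0 : 0 <= p * b) by (apply Rmult_le_pos; lra).
  assert (H2 : (p * a) * (p * a) - (p * b) * (p * b) >= (INR n - s0) * (INR n - s0) - (INR m + s0) * (INR m + s0)).
  { assert ((INR n - s0) * (INR n - s0) <= (p * a) * (p * a)) by (apply Rmult_le_compat; lra).
    assert ((p * b) * (p * b) <= (INR m + s0) * (INR m + s0)) by (apply Rmult_le_compat; lra).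
    lra. }
  assert (H3 : (INR n - s0) * (INR n - s0) - (INR m + s0) * (INR m + s0) >= (INR n * INR n - INR m * INR m) / 2).
  { replace ((INR n - s0) * (INR n - s0) - (INR m + s0) * (INR m + s0)) with ((INR n - INR m - 2 * s0) * (INR n + INR m)) by ring.
    replace (INR n * INR n - INR m * INR m) with ((INR n - INR m) * (INR n + INR m)) by ring.
    assert (INR n - INR m - 2 * s0 >= (INR n - INR m) / 2) by lra.
    assert (0 <= INR n + INR m) by lra. nra. }
  assert (H4 : Cmod (Lam n) - Cmod (Lam m) >= (INR n * INR n - INR m * INR m) / (2 * p * p)).
  { rewrite <- Ha, <- Hb.
    assert (E : a * a - b * b = ((p * a) * (p * a) - (p * b) * (p * b)) / (p * p)) by (field; lra).
    rewrite E.
    replace ((INR n * INR n - INR m * INR m) / (2 * p * p)) with (((INR n * INR n - INR m * INR m) / 2) / (p * p)) by (field; lra).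
    assert (0 < / (p * p)) by (apply Rinv_0_lt_compat; nra).
    unfold Rdiv at 1 3. apply Rle_ge. apply Rmult_le_compat_r. lra. lra. }
  assert (H5 := Cmod_rev_tri (Lam n) (Lam m)).
  rewrite Rabs_pos_eq. simpl. unfold Rdiv in H4. replace (INR n * (INR n * 1) - INR m * (INR m * 1)) with (INR n * INR n - INR m * INR m) by ring.
  replace (1 / (2 * p * p) * (INR n * INR n - INR m * INR m)) with ((INR n * INR n - INR m * INR m) * / (2 * p * p)) by (field; lra).
  lra. simpl. nra.
Qed.

Lemma prefix_count r M : exists N, (N <= M)%nat /\ forall n, (1 <= n)%nat -> (n <= M)%nat ->
  (Cmod (Lam n) <= r <-> (n <= N)%nat).
Proof.
  induction M.
  - exists 0%nat. split; auto. intros n H1 H2. lia.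
  - destruct IHM as [N [HN IH]].
    destruct (Rle_dec (Cmod (Lam (S M))) r) as [Hr|Hr].
    + exists (S M). split; auto. intros n H1 H2. split; intros; auto.
      assert (Hmo := monoG n (S M) H1 H2). lra.
    + exists N. split; auto. intros n H1 H2. destruct (Nat.eq_dec n (S M)) as [->|Hne].
      * split; intros H; [exfalso; auto | lia].
      * apply IH; auto. lia.
Qed.

Lemma count_bound r : 0 < r -> exists N : nat, count_le Lam r N /\ Rabs (p * sqrt r - INR N) <= s0 + 1.
Proof.
  intros Hr. destruct (nat_above' (p * sqrt r + s0)) as [M HM].
  destruct (prefix_count r M) as [N [HNM HN]].
  assert (Hbig : forall n, (1 <= n)%nat -> Cmod (Lam n) <= r -> (n <= M)%nat).
  { intros n H1 H2. destruct (le_lt_dec n M) as [H|H]; auto. exfalso.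
    assert (H3 := est_lo n H1). assert (sqrt (Cmod (Lam n)) <= sqrt r) by (apply sqrt_le_1_alt; auto).
    assert (p * sqrt (Cmod (Lam n)) <= p * sqrt r) by (apply Rmult_le_compat_l; lra).
    assert (INR M < INR n) by (apply lt_INR; auto). lra. }
  assert (Hiff : forall n, (1 <= n)%nat -> (Cmod (Lam n) <= r <-> (n <= N)%nat)).
  { intros n H1. destruct (le_lt_dec n M) as [H|H]. apply HN; auto.
    split; intros H2. assert (H3 := Hbig n H1 H2). lia. lia. }
  exists N. split.
  - exists (seq 1 N). split; [apply seq_NoDup|]. split; [apply length_seq|].
    intros n. rewrite in_seq. split.
    + intros [H1 H2]. split; auto. apply Hiff; auto. lia.
    + intros [H1 H2]. apply Hiff in H2; auto. lia.
  - assert (Hsr : 0 <= sqrt r) by apply sqrt_pos.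
    assert (HN1 : ~ Cmod (Lam (S N)) <= r) by (rewrite Hiff; lia).
    assert (H1 : p * sqrt r <= INR (S N) + s0).
    { assert (sqrt r <= sqrt (Cmod (Lam (S N)))) by (apply sqrt_le_1_alt; lra).
      assert (H3 := est_hi (S N) ltac:(lia)).
      assert (p * sqrt r <= p * sqrt (Cmod (Lam (S N)))) by (apply Rmult_le_compat_l; lra). lra. }
    rewrite S_INR in H1.
    destruct N as [|N'].
    + simpl. rewrite Rminus_0_r, Rabs_pos_eq. simpl in H1. lra. apply Rmult_le_pos; lra.
    + assert (HN2 : Cmod (Lam (S N')) <= r) by (apply Hiff; lia).
      assert (H2 : INR (S N') - s0 <= p * sqrt r).
      { assert (sqrt (Cmod (Lam (S N'))) <= sqrt r) by (apply sqrt_le_1_alt; lra).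
        assert (H3 := est_lo (S N') ltac:(lia)).
        assert (p * sqrt (Cmod (Lam (S N'))) <= p * sqrt r) by (apply Rmult_le_compat_l; lra). lra. }
      apply Rabs_le. split; lra.
Qed.
End Assemble.

Theorem assemble (Lam : nat -> C) (Fam : C -> Prop) :
  (forall z, (exists n, (1 <= n)%nat /\ Lam n = z) <-> Fam z) ->
  (forall n m, (1 <= n)%nat -> (1 <= m)%nat -> Lam n = Lam m -> n = m) ->
  (exists r0, 0 < r0 /\ forall n, (1 <= n)%nat -> r0 <= Re (Lam n)) ->
  (exists sI, forall n, (1 <= n)%nat -> Rabs (Im (Lam n)) <= sI) ->
  (forall n, (1 <= n)%nat -> Cmod (Lam n) <= Cmod (Lam (S n))) ->
  (exists p s0, 0 < p /\ 0 <= s0 /\ forall n, (1 <= n)%nat -> Rabs (p * sqrt (Cmod (Lam n)) - INR n) <= s0) ->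
  (exists c, 0 < c /\ forall n m, (1 <= n)%nat -> (1 <= m)%nat -> n <> m -> c <= Cmod (Cminus (Lam n) (Lam m))) ->
    (forall z : C, (exists n, (1 <= n)%nat /\ Lam n = z) <-> Fam z) /\
    (forall n m, (1 <= n)%nat -> (1 <= m)%nat -> n <> m -> Lam n <> Lam m) /\
    (forall n, (1 <= n)%nat -> 0 < Re (Lam n)) /\
    (exists delta, 0 < delta /\
       forall n, (1 <= n)%nat -> Rabs (Im (Lam n)) <= delta * sqrt (Re (Lam n))) /\
    (forall n, (1 <= n)%nat -> Cmod (Lam n) <= Cmod (Lam (S n))) /\
    (exists (rho : R) (q : nat), 0 < rho /\ (1 <= q)%nat /\
       (forall n m, (1 <= n)%nat -> (1 <= m)%nat -> (q <= Nat.max (n - m) (m - n))%nat ->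
          Cmod (Cminus (Lam n) (Lam m)) >= rho * Rabs (INR n ^ 2 - INR m ^ 2)) /\
       (exists c, 0 < c /\
          forall n m, (1 <= n)%nat -> (1 <= m)%nat -> n <> m ->
            (Nat.max (n - m) (m - n) < q)%nat -> c <= Cmod (Cminus (Lam n) (Lam m)))) /\
    (exists p s, 0 < p /\ 0 < s /\
       forall r, 0 < r -> exists N : nat, count_le Lam r N /\
         Rabs (p * sqrt r - INR N) <= s).
Proof.
  intros Hfam Hinj [r0 [Hr0 Hre]] [sI HsI] Hmono [p [s0 [Hp [Hs0 Hest]]]] [c [Hc Hsep]].
  split; [auto|]. split.
  { intros n m Hn Hm Hnm Heq. apply Hnm. apply Hinj; auto. }
  split.
  { intros n Hn. assert (H := Hre n Hn). lra. }
  split.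
  { assert (HsI0 : 0 <= sI) by (assert (H := HsI 1%nat (le_n 1)); assert (H2 := Rabs_pos (Im (Lam 1%nat))); lra).
    assert (Hsq : 0 < sqrt r0) by (apply sqrt_lt_R0; auto).
    exists ((sI + 1) / sqrt r0). split. apply Rdiv_lt_0_compat; lra.
    intros n Hn. assert (H1 := HsI n Hn). assert (H2 := Hre n Hn).
    assert (sqrt r0 <= sqrt (Re (Lam n))) by (apply sqrt_le_1_alt; auto).
    assert (H3 : (sI + 1) / sqrt r0 * sqrt r0 <= (sI + 1) / sqrt r0 * sqrt (Re (Lam n))).
    { apply Rmult_le_compat_l; auto. left; apply Rdiv_lt_0_compat; lra. }
    replace ((sI + 1) / sqrt r0 * sqrt r0) with (sI + 1) in H3 by (field; lra). lra. }
  split; [auto|]. split.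
  { destruct (nat_above' (4 * s0 + 1)) as [q Hq].
    assert (Hq1 : (1 <= q)%nat) by (destruct q; [simpl in Hq; lra | lia]).
    exists (1 / (2 * p * p)), q. split. apply Rdiv_lt_0_compat; nra. split; auto. split.
    - intros n m Hn Hm Hmax.
      destruct (le_lt_dec (m + q) n) as [H|H].
      + apply (sep_far Lam p s0 Hp Hs0 Hest q); auto.
      + assert (H2 : (n + q <= m)%nat) by lia.
        rewrite Cmod_minus_sym. rewrite <- Rabs_Ropp.
        replace (- (INR n ^ 2 - INR m ^ 2)) with (INR m ^ 2 - INR n ^ 2) by ring.
        apply (sep_far Lam p s0 Hp Hs0 Hest q); auto.
    - exists c. split; [auto|]. intros n m Hn Hm Hnm _. apply Hsep; auto. }
  exists p, (s0 + 1). split; auto. split. lra.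
  intros r Hr. apply (count_bound Lam p s0); auto.
Qed.

Lemma finite_min1 (g : nat -> R) : (forall k, (1 <= k)%nat -> 0 < g k) ->
  forall K, exists c, 0 < c /\ forall k, (1 <= k)%nat -> (k <= K)%nat -> c <= g k.
Proof.
  intros Hg K. induction K.
  - exists 1. split. lra. intros; lia.
  - destruct IHK as [c [Hc H]]. destruct K as [|K'].
    + exists (g 1%nat). split. apply Hg; lia. intros k H1 H2. replace k with 1%nat by lia. lra.
    + exists (Rmin c (g (S (S K')))). split. apply Rmin_pos; auto. apply Hg; lia.
      intros k H1 H2. destruct (Nat.eq_dec k (S (S K'))) as [->|Hne]. apply Rmin_r.
      apply (Rle_trans _ c). apply Rmin_l. apply H; lia.
Qed.

Lemma finite_min2 (f : nat -> nat -> R) : (forall i k, (1 <= i)%nat -> (1 <= k)%nat -> 0 < f i k) ->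
  forall K, exists c, 0 < c /\ forall i k, (1 <= i)%nat -> (1 <= k)%nat -> (i <= K)%nat -> (k <= K)%nat -> c <= f i k.
Proof.
  intros Hf K. induction K.
  - exists 1. split. lra. intros; lia.
  - destruct IHK as [c [Hc H]].
    destruct (finite_min1 (fun k => f (S K) k) ltac:(intros; apply Hf; lia) (S K)) as [c1 [Hc1 H1]].
    destruct (finite_min1 (fun i => f i (S K)) ltac:(intros; apply Hf; lia) (S K)) as [c2 [Hc2 H2]].
    exists (Rmin c (Rmin c1 c2)). split. repeat apply Rmin_pos; auto.
    intros i k Hi Hk HiK HkK.
    assert (M1 := Rmin_l c (Rmin c1 c2)). assert (M2 := Rmin_r c (Rmin c1 c2)).
    assert (M3 := Rmin_l c1 c2). assert (M4 := Rmin_r c1 c2).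
    destruct (Nat.eq_dec i (S K)) as [->|Hi'].
    + assert (H3 := H1 k Hk HkK). simpl in H3. lra.
    + destruct (Nat.eq_dec k (S K)) as [->|Hk'].
      * assert (H3 := H2 i Hi HiK). simpl in H3. lra.
      * assert (H3 := H i k Hi Hk ltac:(lia) ltac:(lia)). lra.
Qed.


Lemma sqrt_add_le a e : 0 <= a -> 0 <= e -> sqrt (a + e) <= sqrt a + sqrt e.
Proof.
  intros Ha He. assert (H1 := sqrt_pos a). assert (H2 := sqrt_pos e).
  rewrite <- (sqrt_square (sqrt a + sqrt e)) by lra. apply sqrt_le_1_alt.
  assert (E1 := sqrt_sqrt a Ha). assert (E2 := sqrt_sqrt e He). nra.
Qed.

Lemma Cmod_pair_ge a b : a <= Cmod (a, b).
Proof. assert (H := re_le_Cmod (a, b)). simpl in H. assert (H2 := Rle_abs a). lra. Qed.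

Lemma Cmod_pair_le a b : 0 <= a -> Cmod (a, b) <= a + Cmod (0, b).
Proof.
  intros Ha. replace (a, b) with (Cplus (RtoC a) (0, b)).
  eapply Rle_trans. apply Cmod_triangle. rewrite Cmod_R, Rabs_pos_eq by auto. lra.
  unfold Cplus, RtoC; simpl. f_equal; ring.
Qed.

Section Fam.
Variables (lam : nat -> R) (g a0 kappa B0 u v : R).
Hypothesis Hg : 0 < g.
Hypothesis Ha0 : 0 < a0.
Hypothesis Hk : 0 < kappa.
Hypothesis Hu : 0 <= u.
Hypothesis Hpos : forall n, (1 <= n)%nat -> 0 < lam n.
Hypothesis Hinc : forall n, (1 <= n)%nat -> lam n < lam (S n).
Hypothesis Hsepl : forall i k, (1 <= i)%nat -> (i < k)%nat -> g + a0 * (INR k - 1) <= lam k - lam i.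
Hypothesis Hest : forall n, (1 <= n)%nat -> Rabs (sqrt (lam n) - kappa * INR n) <= B0.

Definition Xs (i : nat) : C := (lam i + u, v).
Definition Ys (i : nat) : C := RtoC (lam i).

Lemma lam_smono i k : (1 <= i)%nat -> (i < k)%nat -> lam i < lam k.
Proof. intros H1 H2. assert (H := Hsepl i k H1 H2). assert (0 <= a0 * (INR k - 1)).
  { apply Rmult_le_pos. lra. assert (1 <= INR k) by (apply (le_INR 1); lia). lra. } lra. Qed.

Lemma lam_inj i k : (1 <= i)%nat -> (1 <= k)%nat -> lam i = lam k -> i = k.
Proof.
  intros H1 H2 H. destruct (Nat.lt_total i k) as [Hl|[He|Hl]]; auto.
  assert (H3 := lam_smono i k H1 Hl). lra. assert (H3 := lam_smono k i H2 Hl). lra.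
Qed.

Lemma Ys_mono i : (1 <= i)%nat -> Cmod (Ys i) <= Cmod (Ys (S i)).
Proof.
  intros H. unfold Ys. rewrite !Cmod_R. assert (H1 := Hpos i H). assert (H2 := Hinc i H).
  rewrite !Rabs_pos_eq; lra.
Qed.

Lemma Xs_mono i : (1 <= i)%nat -> Cmod (Xs i) <= Cmod (Xs (S i)).
Proof.
  intros H. unfold Xs, Cmod; simpl. apply sqrt_le_1_alt.
  assert (H1 := Hpos i H). assert (H2 := Hinc i H). nra.
Qed.

Lemma Ys_est i : (1 <= i)%nat -> Rabs (sqrt (Cmod (Ys i)) - kappa * INR i) <= B0.
Proof. intros H. unfold Ys. rewrite Cmod_R, (Rabs_pos_eq (lam i)). apply Hest; auto. left; apply Hpos; auto. Qed.

Lemma Xs_est i : (1 <= i)%nat -> Rabs (sqrt (Cmod (Xs i)) - kappa * INR i) <= B0 + sqrt (Cmod (u, v)).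
Proof.
  intros H. assert (H1 := Hpos i H). unfold Xs.
  assert (L1 : lam i <= Cmod (lam i + u, v)) by (assert (H2 := Cmod_pair_ge (lam i + u) v); lra).
  assert (L2 : Cmod (lam i + u, v) <= lam i + Cmod (u, v)).
  { replace (lam i + u, v) with (Cplus (RtoC (lam i)) (u, v)).
    eapply Rle_trans. apply Cmod_triangle. rewrite Cmod_R, Rabs_pos_eq by lra. lra.
    unfold Cplus, RtoC; simpl. f_equal; ring. }
  assert (S1 : sqrt (lam i) <= sqrt (Cmod (lam i + u, v))) by (apply sqrt_le_1_alt; auto).
  assert (S2 : sqrt (Cmod (lam i + u, v)) <= sqrt (lam i) + sqrt (Cmod (u, v))).
  { eapply Rle_trans. apply sqrt_le_1_alt. exact L2. apply sqrt_add_le. lra. apply Cmod_ge_0. }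
  assert (E := Hest i H). apply abs_le_split in E.
  assert (0 <= sqrt (Cmod (u, v))) by apply sqrt_pos.
  apply Rabs_le. split; lra.
Qed.

Lemma Xs_inj i k : (1 <= i)%nat -> (1 <= k)%nat -> Xs i = Xs k -> i = k.
Proof. intros H1 H2 H. unfold Xs in H. injection H as H3. apply lam_inj; auto. lra. Qed.
Lemma Ys_inj i k : (1 <= i)%nat -> (1 <= k)%nat -> Ys i = Ys k -> i = k.
Proof. intros H1 H2 H. unfold Ys, RtoC in H. injection H as H3. apply lam_inj; auto. Qed.

Lemma lam_gap i k : (1 <= i)%nat -> (1 <= k)%nat -> i <> k -> g <= Rabs (lam i - lam k).
Proof.
  intros H1 H2 H. destruct (Nat.lt_total i k) as [Hl|[He|Hl]]; [| lia |].
  - assert (H3 := Hsepl i k H1 Hl). assert (0 <= a0 * (INR k - 1)).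
    { apply Rmult_le_pos. lra. assert (1 <= INR k) by (apply (le_INR 1); lia). lra. }
    rewrite Rabs_minus_sym, Rabs_pos_eq; lra.
  - assert (H3 := Hsepl k i H2 Hl). assert (0 <= a0 * (INR i - 1)).
    { apply Rmult_le_pos. lra. assert (1 <= INR i) by (apply (le_INR 1); lia). lra. }
    rewrite Rabs_pos_eq; lra.
Qed.

Lemma lam_far i k : (1 <= i)%nat -> (1 <= k)%nat -> i <> k ->
  g + a0 * (INR (Nat.max i k) - 1) <= Rabs (lam i - lam k).
Proof.
  intros H1 H2 H. destruct (Nat.lt_total i k) as [Hl|[He|Hl]]; [| lia |].
  - assert (H3 := Hsepl i k H1 Hl). rewrite Nat.max_r by lia.
    rewrite Rabs_minus_sym, Rabs_pos_eq. lra. assert (0 <= a0 * (INR k - 1)).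
    { apply Rmult_le_pos. lra. assert (1 <= INR k) by (apply (le_INR 1); lia). lra. } lra.
  - assert (H3 := Hsepl k i H2 Hl). rewrite Nat.max_l by lia.
    rewrite Rabs_pos_eq. lra. assert (0 <= a0 * (INR i - 1)).
    { apply Rmult_le_pos. lra. assert (1 <= INR i) by (apply (le_INR 1); lia). lra. } lra.
Qed.

Theorem fam_single :
    (forall n m, (1 <= n)%nat -> (1 <= m)%nat -> Ys n = Ys m -> n = m) /\
    (exists r0, 0 < r0 /\ forall n, (1 <= n)%nat -> r0 <= Re (Ys n)) /\
    (exists sI, forall n, (1 <= n)%nat -> Rabs (Im (Ys n)) <= sI) /\
    (forall n, (1 <= n)%nat -> Cmod (Ys n) <= Cmod (Ys (S n))) /\
    (exists p s0, 0 < p /\ 0 <= s0 /\ forall n, (1 <= n)%nat -> Rabs (p * sqrt (Cmod (Ys n)) - INR n) <= s0) /\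
    (exists c, 0 < c /\ forall n m, (1 <= n)%nat -> (1 <= m)%nat -> n <> m -> c <= Cmod (Cminus (Ys n) (Ys m))).
Proof.
  split; [exact Ys_inj|]. split.
  { exists (lam 1%nat). split. apply Hpos; lia. intros n Hn. unfold Ys, RtoC; simpl.
    destruct (Nat.eq_dec n 1) as [->|Hne]. lra. left; apply lam_smono; lia. }
  split. { exists 0. intros n Hn. unfold Ys, RtoC; simpl. rewrite Rabs_R0. lra. }
  split; [exact Ys_mono|]. split.
  { assert (HB0 : 0 <= B0) by (assert (H := Hest 1 (le_n 1)); assert (H2 := Rabs_pos (sqrt (lam 1%nat) - kappa * INR 1)); lra).
    exists (1 / kappa), (B0 / kappa). split. apply Rdiv_lt_0_compat; lra. split. apply Rdiv_le_0_compat; lra.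
    intros n Hn. assert (H := Ys_est n Hn).
    replace (1 / kappa * sqrt (Cmod (Ys n)) - INR n) with ((sqrt (Cmod (Ys n)) - kappa * INR n) / kappa) by (field; lra).
    unfold Rdiv. rewrite Rabs_mult, (Rabs_pos_eq (/ kappa)) by (left; apply Rinv_0_lt_compat; lra).
    apply Rmult_le_compat_r. left; apply Rinv_0_lt_compat; lra. auto. }
  exists g. split; auto. intros n m Hn Hm Hnm.
  replace (Cminus (Ys n) (Ys m)) with (RtoC (lam n - lam m)).
  rewrite Cmod_R. apply lam_gap; auto.
  unfold Ys, Cminus, Cplus, Copp, RtoC; simpl. f_equal; ring.
Qed.

Hypothesis HXY : forall i k, (1 <= i)%nat -> (1 <= k)%nat -> Xs i <> Ys k.

Lemma XY_diff i k : Cminus (Xs i) (Ys k) = Cplus (RtoC (lam i - lam k)) (u, v).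
Proof. unfold Xs, Ys, Cminus, Cplus, Copp, RtoC; simpl. f_equal; ring. Qed.

Lemma XY_sep : exists c, 0 < c /\ forall i k, (1 <= i)%nat -> (1 <= k)%nat -> c <= Cmod (Cminus (Xs i) (Ys k)).
Proof.
  set (w0 := Cmod (u, v)).
  assert (Hw0 : 0 < w0).
  { assert (H := HXY 1 1 (le_n 1) (le_n 1)). unfold w0.
    destruct (Cmod_ge_0 (u, v)) as [H'|H']; auto. exfalso. apply eq_sym, Cmod_eq_0 in H'.
    injection H'. intros Hv Hu'. apply H. unfold Xs, Ys, RtoC. rewrite Hu', Hv. f_equal; ring. }
  destruct (nat_above' (2 * w0 / a0 + 1)) as [K HK].
  destruct (finite_min2 (fun i k => Cmod (Cminus (Xs i) (Ys k)))) with (K := K) as [c1 [Hc1 H1]].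
  { intros i k Hi Hk'. destruct (Cmod_ge_0 (Cminus (Xs i) (Ys k))) as [H|H]; auto. exfalso.
    apply eq_sym, Cmod_eq_0 in H. apply (HXY i k Hi Hk').
    rewrite <- (Cminus_plus (Xs i) (Ys k)), H. apply Cplus_0_l. }
  exists (Rmin c1 w0). split. apply Rmin_pos; auto.
  intros i k Hi Hk'.
  assert (M1 := Rmin_l c1 w0). assert (M2 := Rmin_r c1 w0).
  destruct (Nat.eq_dec i k) as [->|Hne].
  - rewrite XY_diff. replace (lam k - lam k) with 0 by ring.
    replace (Cplus (RtoC 0) (u, v)) with (u, v) by (unfold Cplus, RtoC; simpl; f_equal; ring). fold w0. lra.
  - destruct (le_lt_dec (Nat.max i k) K) as [HM|HM].
    + assert (H := H1 i k Hi Hk' ltac:(lia) ltac:(lia)). simpl in H. lra.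
    + assert (Hf := lam_far i k Hi Hk' Hne).
      assert (HKM : INR K <= INR (Nat.max i k) - 1).
      { replace (INR (Nat.max i k) - 1) with (INR (Nat.max i k - 1)).
        apply le_INR; lia. rewrite minus_INR by lia. simpl; ring. }
      assert (H2 : 2 * w0 <= a0 * (INR (Nat.max i k) - 1)).
      { apply (Rmult_le_reg_r (/ a0)). apply Rinv_0_lt_compat; auto.
        replace (a0 * (INR (Nat.max i k) - 1) * / a0) with (INR (Nat.max i k) - 1) by (field; lra).
        unfold Rdiv in HK. lra. }
      rewrite XY_diff.
      assert (H3 := Cmod_rev_tri (Cplus (RtoC (lam i - lam k)) (u, v)) (Copp (u, v))).
      replace (Cminus (Cplus (RtoC (lam i - lam k)) (u, v)) (Copp (u, v))) with (Cplus (RtoC (lam i - lam k)) (Cplus (u,v) (u, v))) in H3.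
      2: { unfold Cminus, Cplus, Copp; simpl. f_equal; ring. }
      assert (H4 := Cmod_rev_tri (RtoC (lam i - lam k)) (Copp (u, v))).
      replace (Cminus (RtoC (lam i - lam k)) (Copp (u, v))) with (Cplus (RtoC (lam i - lam k)) (u, v)) in H4.
      2: { unfold Cminus, Cplus, Copp; simpl. f_equal; ring. }
      rewrite Cmod_opp, Cmod_R in H4. fold w0 in H4. lra.
Qed.

Lemma fam_sep : exists c, 0 < c /\ forall z w,
  (exists i, (1 <= i)%nat /\ (z = Xs i \/ z = Ys i)) ->
  (exists k, (1 <= k)%nat /\ (w = Xs k \/ w = Ys k)) -> z <> w -> c <= Cmod (Cminus z w).
Proof.
  destruct XY_sep as [c [Hc H]].
  exists (Rmin g c). split. apply Rmin_pos; auto.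
  intros z w [i [Hi Hz]] [k [Hk' Hw]] Hzw.
  assert (M1 := Rmin_l g c). assert (M2 := Rmin_r g c).
  destruct Hz as [ -> | -> ]; destruct Hw as [ -> | -> ].
  - assert (Hne : i <> k) by (intros ->; auto).
    replace (Cminus (Xs i) (Xs k)) with (RtoC (lam i - lam k)).
    rewrite Cmod_R. assert (H1 := lam_gap i k Hi Hk' Hne). lra.
    unfold Xs, Cminus, Cplus, Copp, RtoC; simpl. f_equal; ring.
  - assert (H1 := H i k Hi Hk'). lra.
  - rewrite Cmod_minus_sym. assert (H1 := H k i Hk' Hi). lra.
  - assert (Hne : i <> k) by (intros ->; auto).
    replace (Cminus (Ys i) (Ys k)) with (RtoC (lam i - lam k)).
    rewrite Cmod_R. assert (H1 := lam_gap i k Hi Hk' Hne). lra.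
    unfold Ys, Cminus, Cplus, Copp, RtoC; simpl. f_equal; ring.
Qed.

Theorem fam_main : exists Lam : nat -> C,
    (forall z, (exists n, (1 <= n)%nat /\ Lam n = z) <-> (exists n, (1 <= n)%nat /\ (z = Xs n \/ z = Ys n))) /\
    (forall n m, (1 <= n)%nat -> (1 <= m)%nat -> Lam n = Lam m -> n = m) /\
    (exists r0, 0 < r0 /\ forall n, (1 <= n)%nat -> r0 <= Re (Lam n)) /\
    (exists sI, forall n, (1 <= n)%nat -> Rabs (Im (Lam n)) <= sI) /\
    (forall n, (1 <= n)%nat -> Cmod (Lam n) <= Cmod (Lam (S n))) /\
    (exists p s0, 0 < p /\ 0 <= s0 /\ forall n, (1 <= n)%nat -> Rabs (p * sqrt (Cmod (Lam n)) - INR n) <= s0) /\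
    (exists c, 0 < c /\ forall n m, (1 <= n)%nat -> (1 <= m)%nat -> n <> m -> c <= Cmod (Cminus (Lam n) (Lam m))).
Proof.
  set (B := B0 + sqrt (Cmod (u, v))).
  assert (HBY : forall i, (1 <= i)%nat -> Rabs (sqrt (Cmod (Ys i)) - kappa * INR i) <= B).
  { intros i Hi. assert (H := Ys_est i Hi). assert (0 <= sqrt (Cmod (u, v))) by apply sqrt_pos. unfold B; lra. }
  destruct (merge_seq Xs Ys kappa B Hk Xs_mono Ys_mono Xs_est HBY Xs_inj Ys_inj HXY)
    as [Lam [Hr [Hinj [Hm He]]]].
  assert (HB0 : 0 <= B).
  { assert (H := Xs_est 1 (le_n 1)). assert (H2 := Rabs_pos (sqrt (Cmod (Xs 1%nat)) - kappa * INR 1)). unfold B; lra. }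
  assert (Hmem : forall n, (1 <= n)%nat -> exists i, (1 <= i)%nat /\ (Lam n = Xs i \/ Lam n = Ys i)).
  { intros n Hn. apply Hr. exists n; auto. }
  assert (Hlam1 : forall i, (1 <= i)%nat -> lam 1%nat <= lam i).
  { intros i Hi. destruct (Nat.eq_dec i 1) as [->|Hne]. lra. left; apply lam_smono; lia. }
  exists Lam. split; [auto|]. split; [auto|]. split.
  { exists (lam 1%nat). split. apply Hpos; lia. intros n Hn.
    destruct (Hmem n Hn) as [i0 [Hi' [E|E]]]; rewrite E; unfold Xs, Ys, RtoC; simpl;
    assert (H := Hlam1 i0 Hi'); lra. }
  split.
  { exists (Rabs v). intros n Hn. destruct (Hmem n Hn) as [i0 [Hi' [E|E]]]; rewrite E; unfold Xs, Ys, RtoC; simpl.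
    lra. rewrite Rabs_R0. apply Rabs_pos. }
  split; [auto|]. split.
  { exists (2 / kappa), (1 + 2 * B / kappa). split. apply Rdiv_lt_0_compat; lra. split.
    assert (0 <= 2 * B / kappa) by (apply Rdiv_le_0_compat; lra). lra. auto. }
  destruct fam_sep as [c [Hc Hs]]. exists c. split; [auto|].
  intros n m Hn Hm' Hnm. apply Hs. apply Hmem; auto. apply Hmem; auto.
  intros E. apply Hnm. apply Hinj; auto.
Qed.
End Fam.

Theorem proposition3p5 (alpha mu a1 a2 : R) (j : nat -> R)
  (Halpha : 0 <= alpha < 1)
  (Hmu : mu <= mu_crit alpha)
  (Hj : is_pos_zeros_enum (BesselJ (nu_am alpha mu)) j)
  (Hgap : forall n l : nat, (1 <= n)%nat -> (1 <= l)%nat -> n <> l ->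
     RtoC (lambda_am alpha j n - lambda_am alpha j l) <> Cminus (alpha1 a1 a2) (alpha2 a1 a2)) :
  exists Lam : nat -> C,
    (* Lam (n >= 1) enumerates exactly the family *)
    (forall z : C, (exists n, (1 <= n)%nat /\ Lam n = z) <->
       (exists n, (1 <= n)%nat /\
          (z = Cplus (Cminus (RtoC (lambda_am alpha j n)) (alpha1 a1 a2)) (alpha2 a1 a2)
           \/ z = RtoC (lambda_am alpha j n)))) /\
    (* (1) *)
    (forall n m, (1 <= n)%nat -> (1 <= m)%nat -> n <> m -> Lam n <> Lam m) /\
    (* (2) *)
    (forall n, (1 <= n)%nat -> 0 < Re (Lam n)) /\
    (* (3) *)
    (exists delta, 0 < delta /\
       forall n, (1 <= n)%nat -> Rabs (Im (Lam n)) <= delta * sqrt (Re (Lam n))) /\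
    (* (4) *)
    (forall n, (1 <= n)%nat -> Cmod (Lam n) <= Cmod (Lam (S n))) /\
    (* (5) *)
    (exists (rho : R) (q : nat), 0 < rho /\ (1 <= q)%nat /\
       (forall n m, (1 <= n)%nat -> (1 <= m)%nat -> (q <= Nat.max (n - m) (m - n))%nat ->
          Cmod (Cminus (Lam n) (Lam m)) >= rho * Rabs (INR n ^ 2 - INR m ^ 2)) /\
       (exists c, 0 < c /\
          forall n m, (1 <= n)%nat -> (1 <= m)%nat -> n <> m ->
            (Nat.max (n - m) (m - n) < q)%nat -> c <= Cmod (Cminus (Lam n) (Lam m)))) /\
    (* (6) *)
    (exists p s, 0 < p /\ 0 < s /\
       forall r, 0 < r -> exists N : nat, count_le Lam r N /\
         Rabs (p * sqrt r - INR N) <= s).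
Proof.
  assert (Hnu : 0 <= nu_am alpha mu).
  { unfold nu_am. apply Rmult_le_pos. left; apply Rdiv_lt_0_compat; lra. apply sqrt_pos. }
  destruct (bessel_asym (nu_am alpha mu) j Hnu Hj) as [del [Hdel [Hsp [B HB]]]].
  destruct Hj as [Hj1 [Hj2 _]].
  set (A := ((2 - alpha) / 2) ^ 2).
  assert (HA : 0 < A) by (unfold A; apply pow_lt; lra).
  set (lam := lambda_am alpha j).
  assert (Hlam : forall n, lam n = A * (j n * j n)) by (intros n; unfold lam, lambda_am, A; ring).
  assert (Hjm : forall n m, (1 <= n)%nat -> (n <= m)%nat -> j n <= j m).
  { intros n m H1 H2. induction H2. lra. assert (H := Hj2 m ltac:(lia)). lra. }
  assert (Hj1p : 0 < j 1%nat) by (apply Hj1; lia).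
  assert (Hpos : forall n, (1 <= n)%nat -> 0 < lam n).
  { intros n Hn. rewrite Hlam. destruct (Hj1 n Hn) as [H _]. apply Rmult_lt_0_compat; nra. }
  assert (Hinc : forall n, (1 <= n)%nat -> lam n < lam (S n)).
  { intros n Hn. rewrite !Hlam. destruct (Hj1 n Hn) as [H _]. assert (H2 := Hj2 n Hn).
    apply Rmult_lt_compat_l; auto. nra. }
  assert (Hlin : forall k, (1 <= k)%nat -> j 1%nat + (INR k - 1) * del <= j k).
  { intros k Hk. induction Hk. simpl; lra. rewrite S_INR. assert (H := Hsp m Hk). lra. }
  assert (Hdiff : forall i k, (1 <= i)%nat -> (i < k)%nat -> del <= j k - j i).
  { intros i k Hi Hik. assert (H := Hsp i Hi). assert (H2 := Hjm (S i) k ltac:(lia) Hik). lra. }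
  assert (Hsepl : forall i k, (1 <= i)%nat -> (i < k)%nat ->
            A * del * j 1%nat + A * del * del * (INR k - 1) <= lam k - lam i).
  { intros i k Hi Hik. rewrite !Hlam. assert (H1 := Hdiff i k Hi Hik). assert (H2 := Hlin k ltac:(lia)).
    destruct (Hj1 i Hi) as [Hji _].
    replace (A * (j k * j k) - A * (j i * j i)) with (A * ((j k - j i) * (j k + j i))) by ring.
    replace (A * del * j 1%nat + A * del * del * (INR k - 1)) with (A * (del * (j 1%nat + (INR k - 1) * del))) by ring.
    assert (Hk1 : 1 <= INR k) by (apply (le_INR 1); lia).
    assert (0 <= (INR k - 1) * del) by (apply Rmult_le_pos; lra).
    apply Rmult_le_compat_l; [lra|]. apply Rmult_le_compat; lra. }
  assert (Hest : forall n, (1 <= n)%nat -> Rabs (sqrt (lam n) - sqrt A * PI * INR n) <= sqrt A * B).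
  { intros n Hn. rewrite Hlam. destruct (Hj1 n Hn) as [H _].
    rewrite sqrt_mult_alt by lra. rewrite sqrt_square by lra.
    replace (sqrt A * j n - sqrt A * PI * INR n) with (sqrt A * (j n - PI * INR n)) by ring.
    rewrite Rabs_mult, Rabs_pos_eq by apply sqrt_pos. apply Rmult_le_compat_l. apply sqrt_pos. auto. }
  assert (Hg : 0 < A * del * j 1%nat) by (apply Rmult_lt_0_compat; [apply Rmult_lt_0_compat|]; lra).
  assert (Ha0 : 0 < A * del * del) by (apply Rmult_lt_0_compat; [apply Rmult_lt_0_compat|]; lra).
  assert (Hk : 0 < sqrt A * PI) by (apply Rmult_lt_0_compat; [apply sqrt_lt_R0; auto | apply PI_RGT_0]).
  fold lam. fold lam in Hgap.
  set (d := a2 ^ 2 + 4 * a1).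
  destruct (Rlt_dec 0 d) as [Hd|Hd]; [|destruct (Rlt_dec d 0) as [Hd'|Hd']].
  -
    set (s := sqrt d). assert (Hs : 0 < s) by (apply sqrt_lt_R0; auto).
    assert (E1 : alpha1 a1 a2 = RtoC ((a2 - s) / 2)).
    { unfold alpha1. cbv zeta. fold d. destruct (Rlt_dec 0 d); [auto | lra]. }
    assert (E2 : alpha2 a1 a2 = RtoC ((a2 + s) / 2)).
    { unfold alpha2. cbv zeta. fold d. destruct (Rlt_dec 0 d); [auto | lra]. }
    rewrite E1, E2 in Hgap |- *.
    assert (HX : forall n, Cplus (Cminus (RtoC (lam n)) (RtoC ((a2 - s) / 2))) (RtoC ((a2 + s) / 2)) = Xs lam s 0 n).
    { intros n. unfold Xs, Cplus, Cminus, Copp, RtoC; simpl. f_equal; field. }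
    destruct (fam_main lam (A * del * j 1%nat) (A * del * del) (sqrt A * PI) (sqrt A * B) s 0
                Hg Ha0 Hk ltac:(lra) Hpos Hinc Hsepl Hest) as [Lam [Hr [Hinj [Hre [Him [Hmo [Hes Hse]]]]]]].
    { intros i k Hi Hk' Heq. unfold Xs, Ys, RtoC in Heq. injection Heq as Heq.
      destruct (Nat.eq_dec i k) as [->|Hne]. lra.
      apply (Hgap i k Hi Hk' Hne). unfold Cminus, Cplus, Copp, RtoC; simpl. f_equal; lra. }
    exists Lam. apply assemble; auto.
    intros z. rewrite Hr. split; intros [n [Hn Hz]]; exists n; split; auto; rewrite HX in *; exact Hz.
  -
    set (s := sqrt (- d)). assert (Hs : 0 < s) by (apply sqrt_lt_R0; lra).
    assert (E1 : alpha1 a1 a2 = (a2 / 2, s / 2)).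
    { unfold alpha1. cbv zeta. fold d. destruct (Rlt_dec 0 d); [lra|]. destruct (Rlt_dec d 0); [auto|lra]. }
    assert (E2 : alpha2 a1 a2 = (a2 / 2, - (s / 2))).
    { unfold alpha2. cbv zeta. fold d. destruct (Rlt_dec 0 d); [lra|]. destruct (Rlt_dec d 0); [auto|lra]. }
    rewrite E1, E2.
    assert (HX : forall n, Cplus (Cminus (RtoC (lam n)) (a2 / 2, s / 2)) (a2 / 2, - (s / 2)) = Xs lam 0 (- s) n).
    { intros n. unfold Xs, Cplus, Cminus, Copp, RtoC; simpl. f_equal; field. }
    destruct (fam_main lam (A * del * j 1%nat) (A * del * del) (sqrt A * PI) (sqrt A * B) 0 (- s)
                Hg Ha0 Hk ltac:(lra) Hpos Hinc Hsepl Hest) as [Lam [Hr [Hinj [Hre [Him [Hmo [Hes Hse]]]]]]].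
    { intros i k Hi Hk' Heq. unfold Xs, Ys, RtoC in Heq. injection Heq as Heq1 Heq2. lra. }
    exists Lam. apply assemble; auto.
    intros z. rewrite Hr. split; intros [n [Hn Hz]]; exists n; split; auto; rewrite HX in *; exact Hz.
  -
    assert (E1 : alpha1 a1 a2 = RtoC (a2 / 2)).
    { unfold alpha1. cbv zeta. fold d. destruct (Rlt_dec 0 d); [lra|]. destruct (Rlt_dec d 0); [lra|auto]. }
    assert (E2 : alpha2 a1 a2 = RtoC (a2 / 2)).
    { unfold alpha2. cbv zeta. fold d. destruct (Rlt_dec 0 d); [lra|]. destruct (Rlt_dec d 0); [lra|auto]. }
    rewrite E1, E2.
    assert (HX : forall n, Cplus (Cminus (RtoC (lam n)) (RtoC (a2 / 2))) (RtoC (a2 / 2)) = Ys lam n).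
    { intros n. unfold Ys, Cplus, Cminus, Copp, RtoC; simpl. f_equal; field. }
    destruct (fam_single lam (A * del * j 1%nat) (A * del * del) (sqrt A * PI) (sqrt A * B)
                Hg Ha0 Hk Hpos Hinc Hsepl Hest) as [Hinj [Hre [Him [Hmo [Hes Hse]]]]].
    exists (Ys lam). apply assemble; auto.
    intros z. split.
    + intros [n [Hn Hz]]. exists n. split; [auto|]. right. rewrite <- Hz. reflexivity.
    + intros [n [Hn Hz]]. exists n. split; [auto|]. rewrite HX in Hz. destruct Hz as [Hz|Hz]; rewrite Hz; reflexivity.
Qed.
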